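(* Let $P$ be a program over a propositional signature $\Sigma$ and $q\in\Sigma$. If $\langle P,\{q\}\rangle$ does not satisfy criterion $\Omega$, then for every program $R$ over $\Sigma$ with $q\notin\Sigma(R)$ we have $AS(f_{SP}(P,q)\cup R)=\{Y\setminus\{q\}: Y\in AS(P\cup R)\}$.
   Context: A program over $\Sigma$ is a finite set of rules $r$ of the form $a_1\vee\dots\vee a_k\leftarrow b_1,\dots,b_l,\ not\,c_1,\dots,not\,c_m,\ not\,not\,d_1,\dots,not\,not\,d_n$ with atoms in $\Sigma$; write $H(r)=\{a_i\}$, $B^+(r)=\{b_i\}$, $B^-(r)=\{c_i\}$, $B^{--}(r)=\{d_i\}$, $B(r)=B^+(r)\cup\{not\,c: c\in B^-(r)\}\cup\{not\,not\,d:d\in B^{--}(r)\}$ (elements of $B(r)$ are literals); a rule is written $H(r)\leftarrow B(r)$. $\Sigma(r)$, $\Sigma(P)$ are the atoms occurring in $r$, $P$. Reduct: $P^I=\{H(r)\leftarrow B^+(r): r\in P, B^-(r)\cap I=\emptyset, B^{--}(r)\subseteq I\}$. $I$ classically satisfies $r$ if $B^+(r)\subseteq I$, $B^-(r)\cap I=\emptyset$, $B^{--}(r)\subseteq I$ imply $H(r)\cap I\ne\emptyset$. An HT-interpretation $\langle X,Y\rangle$ ($X\subseteq Y$) is an HT-model of $P$ if $Y$ classically satisfies all rules of $P$ and $X$ all rules of $P^Y$; $\mathcal{HT}(P)$ is the set of HT-models of $P$ with $X,Y\subseteq\Sigma(P)$. $Y$ is an answer set of $P$ if $\langle Y,Y\rangle\in\mathcal{HT}(P)$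 and no $X\subsetneq Y$ has $\langle X,Y\rangle\in\mathcal{HT}(P)$; $AS(P)$ is the set of answer sets. Criterion $\Omega$: for a program $P$, $V\subseteq\Sigma$, $Y\subseteq\Sigma\setminus V$, $A\subseteq V$, let $R^{Y,A}=\{X\setminus V:\langle X,Y\cup A\rangle\in\mathcal{HT}(P)\}$, $Rel^Y=\{A\subseteq V:\langle Y\cup A,Y\cup A\rangle\in\mathcal{HT}(P)$ and no $A'\subsetneq A$ has $\langle Y\cup A',Y\cup A\rangle\in\mathcal{HT}(P)\}$, $\mathcal{R}^Y=\{R^{Y,A}:A\in Rel^Y\}$. $\langle P,V\rangle$ satisfies $\Omega$ if there is $Y\subseteq\Sigma\setminus V$ such that $\mathcal{R}^Y$ is non-empty and has no least element with respect to $\subseteq$. Normal form: $r$ is tautological if $H(r)\cap B^+(r)\ne\emptyset$ or $B^+(r)\cap B^-(r)\ne\emptyset$ or $B^-(r)\cap B^{--}(r)\ne\emptyset$; $r\in P$ is minimal in $P$ if no $r'\in P$ has ($H(r')\subseteq H(r)$ and $B(r')\subsetneq B(r)$) or ($H(r')\subsetneq H(r)$ and $B(r')\subseteq B(r)$). $NF(P)$ is obtained by: 1. removing tautological rules; 2. removing from $B^{--}(r)$ atoms in $B^+(r)$; 3. removing from $H(r)$ atoms in $B^-(r)$; 4. removing rules not minimal in the resulting program. Notation: for a set $S$ of literals, $not\,(S)=\{not\,s:s\in S\}$, $not\,not\,(S)=\{not\,not\,s:s\in S\}$, simplifying $not\,not\,not\,p=not\,p$ and $not\,not\,not\,not\,p=not\,not\,p$.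 $B^{\setminus q}(r)=B(r)\setminus\{q,not\,q,not\,not\,q\}$, $H^{\setminus q}(r)=H(r)\setminus\{q\}$. For a set of rules $Q$, $D_q(Q)$ is the set of all sets $not\,(\{l_1,\dots,l_m\})\cup not\,not\,(\{l_{m+1},\dots,l_n\})$ where $\langle\{r_1,\dots,r_m\},\{r_{m+1},\dots,r_n\}\rangle$ is a partition of $Q$ (parts possibly empty), $l_i\in B^{\setminus q}(r_i)$ for $i\le m$, $l_j\in H^{\setminus q}(r_j)$ for $j>m$ (so $D_q(\emptyset)=\{\emptyset\}$). The operator $f_{SP}$: let $P'=NF(P)$, $R=\{r\in P': q\notin\Sigma(r)\}$, $R_0=\{r\in P':q\in B(r)\}$, $R_1=\{r\in P': not\,q\in B(r)\}$, $R_2=\{r\in P': not\,not\,q\in B(r), q\notin H(r)\}$, $R_3=\{r\in P': not\,not\,q\in B(r), q\in H(r)\}$, $R_4=\{r\in P': not\,not\,q\notin B(r), q\in H(r)\}$. $P''$ consists of: every $r\in R$; and (1a) for $r_0\in R_0$, $r_4\in R_4$: $H(r_0)\cup H^{\setminus q}(r_4)\leftarrow B^{\setminus q}(r_0)\cup B(r_4)$; (2a) for $r_0\in R_0$, $r_3\in R_3$, $r'\in R_1\cup R_4$: $H(r_0)\cup H^{\setminus q}(r_3)\leftarrow B^{\setminus q}(r_0)\cup B^{\setminus q}(r_3)\cup not\,(H^{\setminus q}(r'))\cup not\,not\,(B^{\setminus q}(r'))$; (3a) for $r_0\in R_0$, $r_3\in R_3$, $h\in H(r_0)$, $D\in D_q((R_0\cup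 R_2)\setminus\{r_0\})$: $H(r_0)\leftarrow B^{\setminus q}(r_0)\cup\{not\,not\,h\}\cup D\cup B^{\setminus q}(r_3)\cup not\,(H^{\setminus q}(r_3))$; (1b) for $r_2\in R_2$, $r_4\in R_4$: $H(r_2)\leftarrow B^{\setminus q}(r_2)\cup not\,(H^{\setminus q}(r_4))\cup not\,not\,(B(r_4))$; (2b) for $r_2\in R_2$, $r_3\in R_3$, $r'\in R_1\cup R_4$: $H(r_2)\leftarrow B^{\setminus q}(r_2)\cup not\,(H^{\setminus q}(r_3)\cup H^{\setminus q}(r'))\cup not\,not\,(B^{\setminus q}(r_3)\cup B^{\setminus q}(r'))$; (3b) for $r_2\in R_2$, $r_3\in R_3$, $h\in H(r_2)$, $D\in D_q((R_0\cup R_2)\setminus\{r_2\})$: $H(r_2)\leftarrow B^{\setminus q}(r_2)\cup not\,(H^{\setminus q}(r_3))\cup not\,not\,(B^{\setminus q}(r_3)\cup\{h\})\cup D$; (4) for $r'\in R_1\cup R_4$, $D\in D_q(R_3\cup R_4)$ with $D\cap not\,(B^{\setminus q}(r'))=\emptyset$: $H^{\setminus q}(r')\leftarrow B^{\setminus q}(r')\cup D$; (5) for $r'\in R_1\cup R_4$, $r_3\in R_3$, $r\in R_0\cup R_2$, $D\in D_q(R_4)$ with $D\cap not\,(B^{\setminus q}(r'))=\emptyset$: $H^{\setminus q}(r')\leftarrow B^{\setminus q}(r')\cup not\,(H(r)\cup H^{\setminus q}(r_3))\cup not\,not\,(B^{\setminus q}(r)\cup B^{\setminus q}(r_3))\cup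 D$; (6) for $r'\in R_1\cup R_4$, $r_3\in R_3$, $h\in H^{\setminus q}(r')$, $D\in D_q((R_1\cup R_4)\setminus\{r'\})$: $H^{\setminus q}(r')\leftarrow B^{\setminus q}(r')\cup not\,(H^{\setminus q}(r_3))\cup not\,not\,(B^{\setminus q}(r_3)\cup\{h\})\cup D$; (7) for $r_0\in R_0$, $r_3,r_3'\in R_3$ with $r_3\ne r_3'$, $D\in D_q((R_0\cup R_2)\setminus\{r_0\})$, $h\in H(r_0)$: $H(r_0)\cup H^{\setminus q}(r_3)\leftarrow B^{\setminus q}(r_0)\cup B^{\setminus q}(r_3)\cup not\,(H^{\setminus q}(r_3'))\cup not\,not\,(B^{\setminus q}(r_3')\cup\{h\})\cup D$. Then $f_{SP}(P,q)=NF(P'')$. *)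

(* Defs.v *)
From HB Require Import structures.
From mathcomp Require Import all_boot.
From mathcomp Require Import boolp.

Set Implicit Arguments.
Unset Strict Implicit.
Unset Printing Implicit Defensive.

(* Atoms: a finite propositional signature A (a finType).
   A rule  a1 v ... v ak <- b1..bl, not c1..not cm, not not d1..not not dn
   is the quadruple (H, B+, B-, B--) of finite sets of atoms. *)
Notation rule A := ({set A} * {set A} * {set A} * {set A})%type.
Notation program A := {set rule A}.

Section ASP.
Variable A : finType.

Definition Hd  (r : rule A) : {set A} := r.1.1.1.
Definition Bp  (r : rule A) : {set A} := r.1.1.2.
Definition Bm  (r : rule A) : {set A} := r.1.2.
Definition Bnn (r : rule A) : {set A} := r.2.

Definition sig_rule (r : rule A) : {set A} := Hd r :|: Bp r :|: Bm r :|: Bnn r.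
Definition sig_prog (P : program A) : {set A} := \bigcup_(r in P) sig_rule r.

Definition lit := (A + A + A)%type.
Definition pos (a : A) : lit := inl (inl a).
Definition neg (a : A) : lit := inl (inr a).
Definition nn  (a : A) : lit := inr a.

Definition Blits (r : rule A) : {set lit} :=
  [set pos a | a in Bp r] :|: [set neg a | a in Bm r] :|: [set nn a | a in Bnn r].

(* not l and not not l, with not not not p = not p, not not not not p = not not p *)
Definition notl (l : lit) : lit :=
  match l with inl (inl a) => neg a | inl (inr a) => nn a | inr a => neg a end.
Definition nnl (l : lit) : lit :=
  match l with inl (inl a) => nn a | inl (inr a) => neg a | inr a => nn a end.
Definition notS (S : {set lit}) : {set lit} := [set notl l | l in S].
Definition nnS  (S : {set lit}) : {set lit} := [set nnl l | l in S].
Definition posS (S : {set A}) : {set lit} := [set pos a | a in S].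

Definition mkrule (h : {set A}) (b : {set lit}) : rule A :=
  (h, [set a | pos a \in b], [set a | neg a \in b], [set a | nn a \in b]).

Definition csat (I : {set A}) (r : rule A) : bool :=
  [&& Bp r \subset I, [disjoint Bm r & I] & Bnn r \subset I] ==>
    (Hd r :&: I != set0).

Definition reduct (P : program A) (I : {set A}) : program A :=
  [set ((Hd r, Bp r, set0, set0) : rule A)
     | r in [set r in P | [disjoint Bm r & I] && (Bnn r \subset I)]].

Definition ht (P : program A) (X Y : {set A}) : bool :=
  [&& X \subset Y, Y \subset sig_prog P,
      [forall r in P, csat Y r] & [forall r in reduct P Y, csat X r]].

Definition AS (P : program A) : {set {set A}} :=
  [set Y | ht P Y Y && [forall X : {set A}, (X \proper Y) ==> ~~ ht P X Y]].

Definition RYA (P : program A) (V Y A' : {set A}) : {set {set A}} :=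
  [set X :\: V | X in [set X | ht P X (Y :|: A')]].

Definition Rel (P : program A) (V Y : {set A}) : {set {set A}} :=
  [set A' : {set A} | [&& A' \subset V, ht P (Y :|: A') (Y :|: A')
            & [forall A'' : {set A}, (A'' \proper A') ==> ~~ ht P (Y :|: A'') (Y :|: A')]]].

Definition calR (P : program A) (V Y : {set A}) : {set {set {set A}}} :=
  [set RYA P V Y A' | A' in Rel P V Y].

Definition Omega (P : program A) (V : {set A}) : Prop :=
  exists Y : {set A}, Y \subset ~: V /\ calR P V Y != set0 /\
    ~ (exists L, L \in calR P V Y /\ forall R', R' \in calR P V Y -> L \subset R').

Definition taut (r : rule A) : bool :=
  (Hd r :&: Bp r != set0) || (Bp r :&: Bm r != set0) || (Bm r :&: Bnn r != set0).

Definition step23 (r : rule A) : rule A :=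
  (Hd r :\: Bm r, Bp r, Bm r, Bnn r :\: Bp r).

Definition minimal_in (P : program A) (r : rule A) : bool :=
  [forall r' in P,
    ~~ (((Hd r' \subset Hd r) && (Blits r' \proper Blits r)) ||
        ((Hd r' \proper Hd r) && (Blits r' \subset Blits r)))].

Definition NF (P : program A) : program A :=
  let P2 := [set step23 r | r in [set r in P | ~~ taut r]] in
  [set r in P2 | minimal_in P2 r].

Definition Bq (q : A) (r : rule A) : {set lit} := Blits r :\: [set pos q; neg q; nn q].
Definition Hq (q : A) (r : rule A) : {set A} := Hd r :\ q.

Definition Dq (q : A) (Q : program A) (D : {set lit}) : Prop :=
  exists (Q1 : program A) (l : rule A -> lit),
    [/\ Q1 \subset Q,
        (forall r, r \in Q1 -> l r \in Bq q r),
        (forall r, r \in Q :\: Q1 -> l r \in posS (Hq q r)) &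
        D = notS (l @: Q1) :|: nnS (l @: (Q :\: Q1))].

Section FSP.
Variables (P' : program A) (q : A).
Definition Rq := [set r in P' | q \notin sig_rule r].
Definition R0 := [set r in P' | q \in Bp r].
Definition R1 := [set r in P' | q \in Bm r].
Definition R2 := [set r in P' | (q \in Bnn r) && (q \notin Hd r)].
Definition R3 := [set r in P' | (q \in Bnn r) && (q \in Hd r)].
Definition R4 := [set r in P' | (q \notin Bnn r) && (q \in Hd r)].

Definition new_rule (x : rule A) : Prop :=
  (* (1a) *)
  (exists r0 r4, [/\ r0 \in R0, r4 \in R4 &
     x = mkrule (Hd r0 :|: Hq q r4) (Bq q r0 :|: Blits r4)]) \/
  (* (2a) *)
  (exists r0 r3 r', [/\ r0 \in R0, r3 \in R3, r' \in R1 :|: R4 &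
     x = mkrule (Hd r0 :|: Hq q r3)
       (Bq q r0 :|: Bq q r3 :|: notS (posS (Hq q r')) :|: nnS (Bq q r'))]) \/
  (* (3a) *)
  (exists r0 r3 h D, [/\ r0 \in R0, r3 \in R3, h \in Hd r0,
     Dq q ((R0 :|: R2) :\ r0) D &
     x = mkrule (Hd r0)
       (Bq q r0 :|: [set nn h] :|: D :|: Bq q r3 :|: notS (posS (Hq q r3)))]) \/
  (* (1b) *)
  (exists r2 r4, [/\ r2 \in R2, r4 \in R4 &
     x = mkrule (Hd r2) (Bq q r2 :|: notS (posS (Hq q r4)) :|: nnS (Blits r4))]) \/
  (* (2b) *)
  (exists r2 r3 r', [/\ r2 \in R2, r3 \in R3, r' \in R1 :|: R4 &
     x = mkrule (Hd r2)
       (Bq q r2 :|: notS (posS (Hq q r3 :|: Hq q r'))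
                :|: nnS (Bq q r3 :|: Bq q r'))]) \/
  (* (3b) *)
  (exists r2 r3 h D, [/\ r2 \in R2, r3 \in R3, h \in Hd r2,
     Dq q ((R0 :|: R2) :\ r2) D &
     x = mkrule (Hd r2)
       (Bq q r2 :|: notS (posS (Hq q r3)) :|: nnS (Bq q r3 :|: [set pos h]) :|: D)]) \/
  (* (4) *)
  (exists r' D, [/\ r' \in R1 :|: R4, Dq q (R3 :|: R4) D,
     D :&: notS (Bq q r') = set0 &
     x = mkrule (Hq q r') (Bq q r' :|: D)]) \/
  (* (5) *)
  (exists r' r3 r D, [/\ r' \in R1 :|: R4, r3 \in R3, r \in R0 :|: R2,
     Dq q R4 D /\ D :&: notS (Bq q r') = set0 &
     x = mkrule (Hq q r')
       (Bq q r' :|: notS (posS (Hd r :|: Hq q r3))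
                :|: nnS (Bq q r :|: Bq q r3) :|: D)]) \/
  (* (6) *)
  (exists r' r3 h D, [/\ r' \in R1 :|: R4, r3 \in R3, h \in Hq q r',
     Dq q ((R1 :|: R4) :\ r') D &
     x = mkrule (Hq q r')
       (Bq q r' :|: notS (posS (Hq q r3)) :|: nnS (Bq q r3 :|: [set pos h]) :|: D)]) \/
  (* (7) *)
  (exists r0 r3 r3' D h, [/\ r0 \in R0, r3 \in R3, r3' \in R3, r3 != r3' &
     [/\ Dq q ((R0 :|: R2) :\ r0) D, h \in Hd r0 &
     x = mkrule (Hd r0 :|: Hq q r3)
       (Bq q r0 :|: Bq q r3 :|: notS (posS (Hq q r3'))
                :|: nnS (Bq q r3' :|: [set pos h]) :|: D)]]).
End FSP.

Definition fSP (P : program A) (q : A) : program A :=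
  let P' := NF P in
  NF ([set x | (x \in Rq P' q) || `[< new_rule P' q x >] ]).

End ASP.

(* Main.v *)
Require Import Defs.
From HB Require Import structures.
From mathcomp Require Import all_boot.
From mathcomp Require Import boolp.
From mathcomp Require Import zify.
From Stdlib Require Classical_Prop.

Set Implicit Arguments. Unset Strict Implicit. Unset Printing Implicit Defensive.

Lemma forall_inU (T : finType) (p : pred T) (L1 L2 : {set T}) :
  [forall l in L1 :|: L2, p l] = [forall l in L1, p l] && [forall l in L2, p l].
Proof.
apply/forall_inP/andP => [H|[/forall_inP H1 /forall_inP H2]].
  by split; apply/forall_inP => l Hl; apply: H; rewrite in_setU Hl ?orbT.
by move=> l; rewrite in_setU => /orP[]; auto.
Qed.

Lemma forall_in_imset (T T' : finType) (f : T -> T') (p : pred T') (S : {set T}) :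
  [forall l in f @: S, p l] = [forall a in S, p (f a)].
Proof.
apply/forall_inP/forall_inP => [H a Ha|H l /imsetP[a Ha ->]]; last exact: H.
by apply: H; apply: imset_f.
Qed.

Lemma forall_in1 (T : finType) (p : pred T) x : [forall l in [set x], p l] = p x.
Proof.
apply/forall_inP/idP => [H|H l]; first by apply: H; rewrite inE.
by rewrite inE => /eqP ->.
Qed.

Lemma forall_in0 (T : finType) (p : pred T) : [forall l in set0, p l].
Proof. by apply/forall_inP => l; rewrite inE. Qed.

Section Sem.
Variable A : finType.
Implicit Types (X Y S : {set A}) (r : rule A) (P : program A) (L : {set lit A}).

Definition litY Y (l : lit A) : bool :=
  match l with inl (inl a) => a \in Y | inl (inr a) => a \notin Y | inr a => a \in Y end.
Definition litX X Y (l : lit A) : bool :=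
  match l with inl (inl a) => a \in X | inl (inr a) => a \notin Y | inr a => a \in Y end.
Definition latom (l : lit A) : A :=
  match l with inl (inl a) => a | inl (inr a) => a | inr a => a end.
Definition bodyY Y L := [forall l in L, litY Y l].
Definition bodyX X Y L := [forall l in L, litX X Y l].
Definition satr X Y r :=
  (bodyY Y (Blits r) ==> (Hd r :&: Y != set0)) &&
  (bodyX X Y (Blits r) ==> (Hd r :&: X != set0)).
Definition htm P X Y := (X \subset Y) && [forall r in P, satr X Y r].

Lemma bodyYU Y L1 L2 : bodyY Y (L1 :|: L2) = bodyY Y L1 && bodyY Y L2.
Proof. exact: forall_inU. Qed.
Lemma bodyXU X Y L1 L2 : bodyX X Y (L1 :|: L2) = bodyX X Y L1 && bodyX X Y L2.
Proof. exact: forall_inU. Qed.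

Lemma litY_notl Y l : litY Y (notl l) = ~~ litY Y l.
Proof. by case: l => [[a|a]|a] //=; rewrite negbK. Qed.
Lemma litX_notl X Y l : litX X Y (notl l) = ~~ litY Y l.
Proof. by case: l => [[a|a]|a] //=; rewrite negbK. Qed.
Lemma litY_nnl Y l : litY Y (nnl l) = litY Y l.
Proof. by case: l => [[a|a]|a]. Qed.
Lemma litX_nnl X Y l : litX X Y (nnl l) = litY Y l.
Proof. by case: l => [[a|a]|a]. Qed.

Definition nbodyY Y L := [forall l in L, ~~ litY Y l].

Lemma bodyY_notS Y L : bodyY Y (notS L) = nbodyY Y L.
Proof. by rewrite /bodyY /notS forall_in_imset; apply: eq_forallb => l; rewrite litY_notl. Qed.
Lemma bodyX_notS X Y L : bodyX X Y (notS L) = nbodyY Y L.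
Proof. by rewrite /bodyX /notS forall_in_imset; apply: eq_forallb => l; rewrite litX_notl. Qed.
Lemma bodyY_nnS Y L : bodyY Y (nnS L) = bodyY Y L.
Proof. by rewrite /bodyY /nnS forall_in_imset; apply: eq_forallb => l; rewrite litY_nnl. Qed.
Lemma bodyX_nnS X Y L : bodyX X Y (nnS L) = bodyY Y L.
Proof. by rewrite /bodyX /nnS forall_in_imset; apply: eq_forallb => l; rewrite litX_nnl. Qed.
Lemma nbodyYU Y L1 L2 : nbodyY Y (L1 :|: L2) = nbodyY Y L1 && nbodyY Y L2.
Proof. exact: forall_inU. Qed.

Lemma bodyY_posS Y H : bodyY Y (posS H) = (H \subset Y).
Proof.
rewrite /bodyY /posS forall_in_imset.
by apply/forall_inP/subsetP => Hs a Ha; apply: Hs.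
Qed.
Lemma nbodyY_posS Y H : nbodyY Y (posS H) = (H :&: Y == set0).
Proof.
rewrite /nbodyY /posS forall_in_imset.
apply/forall_inP/eqP => [Hs|H0 a Ha /=].
  apply/setP => a; rewrite !inE; apply/negP => /andP[Ha HY].
  by have := Hs a Ha; rewrite /= HY.
apply/negP => HY; have : a \in H :&: Y by rewrite inE Ha HY.
by rewrite H0 inE.
Qed.
Lemma bodyY1 Y l : bodyY Y [set l] = litY Y l.
Proof. exact: forall_in1. Qed.
Lemma bodyX1 X Y l : bodyX X Y [set l] = litX X Y l.
Proof. exact: forall_in1. Qed.

Lemma pos_inj : injective (@pos A). Proof. by move=> a b []. Qed.
Lemma neg_inj : injective (@neg A). Proof. by move=> a b []. Qed.
Lemma nn_inj : injective (@nn A). Proof. by move=> a b []. Qed.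

Lemma Blits_mkrule h L : Blits (mkrule h L) = L.
Proof.
apply/setP => l; rewrite /Blits /mkrule /Bp /Bm /Bnn /= !in_setU.
case: l => [[a|a]|a].
- rewrite (mem_imset _ _ pos_inj) inE.
  have -> : (pos a \in [set neg x | x in [set a0 | neg a0 \in L]]) = false by apply/imsetP => -[].
  have -> : (pos a \in [set nn x | x in [set a0 | nn a0 \in L]]) = false by apply/imsetP => -[].
  by rewrite !orbF.
- rewrite (mem_imset _ _ neg_inj) inE.
  have -> : (neg a \in [set pos x | x in [set a0 | pos a0 \in L]]) = false by apply/imsetP => -[].
  have -> : (neg a \in [set nn x | x in [set a0 | nn a0 \in L]]) = false by apply/imsetP => -[].
  by rewrite orbF.
- rewrite (mem_imset _ _ nn_inj) inE.
  have -> : (nn a \in [set pos x | x in [set a0 | pos a0 \in L]]) = false by apply/imsetP => -[].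
  have -> : (nn a \in [set neg x | x in [set a0 | neg a0 \in L]]) = false by apply/imsetP => -[].
  by [].
Qed.

Lemma Hd_mkrule h L : Hd (mkrule h L) = h. Proof. by []. Qed.

Lemma bodyY_Blits Y r :
  bodyY Y (Blits r) = [&& Bp r \subset Y, [disjoint Bm r & Y] & Bnn r \subset Y].
Proof.
rewrite /Blits !bodyYU /bodyY !forall_in_imset /=.
rewrite -andbA; congr (_ && (_ && _)).
- by apply/forall_inP/subsetP => H a Ha; apply: H.
- rewrite disjoint_subset; apply/forall_inP/subsetP => H a Ha; first by rewrite inE; apply: H.
  by have := H a Ha; rewrite inE.
- by apply/forall_inP/subsetP => H a Ha; apply: H.
Qed.

Lemma bodyX_Blits X Y r :
  bodyX X Y (Blits r) = [&& Bp r \subset X, [disjoint Bm r & Y] & Bnn r \subset Y].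
Proof.
rewrite /Blits !bodyXU /bodyX !forall_in_imset /=.
rewrite -andbA; congr (_ && (_ && _)).
- by apply/forall_inP/subsetP => H a Ha; apply: H.
- rewrite disjoint_subset; apply/forall_inP/subsetP => H a Ha; first by rewrite inE; apply: H.
  by have := H a Ha; rewrite inE.
- by apply/forall_inP/subsetP => H a Ha; apply: H.
Qed.


Lemma litX_mono X X' Y l : X \subset X' -> litX X Y l -> litX X' Y l.
Proof. by move=> /subsetP s; case: l => [[a|a]|a] //= /s. Qed.
Lemma litXY X Y l : X \subset Y -> litX X Y l -> litY Y l.
Proof. by move=> /subsetP s; case: l => [[a|a]|a] //= /s. Qed.
Lemma litXYY Y l : litX Y Y l = litY Y l.
Proof. by case: l => [[a|a]|a]. Qed.
Lemma bodyX_mono X X' Y L : X \subset X' -> bodyX X Y L -> bodyX X' Y L.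
Proof. by move=> s /forall_inP H; apply/forall_inP => l /H; apply: litX_mono. Qed.
Lemma bodyXY X Y L : X \subset Y -> bodyX X Y L -> bodyY Y L.
Proof. by move=> s /forall_inP H; apply/forall_inP => l /H; apply: litXY. Qed.
Lemma bodyXYY Y L : bodyX Y Y L = bodyY Y L.
Proof. by apply: eq_forallb => l; rewrite litXYY. Qed.

Lemma csat_reduct P X Y :
  [forall r in P, csat Y r] && [forall r in reduct P Y, csat X r] =
  [forall r in P, satr X Y r].
Proof.
rewrite /reduct forall_in_imset.
apply/andP/forall_inP => [[/forall_inP HY /forall_inP HX] r Hr|H].
  rewrite /satr bodyY_Blits bodyX_Blits; apply/andP; split; first exact: HY.
  apply/implyP => /and3P[bp dm bn].
  have := HX r; rewrite inE Hr dm bn /= => /(_ isT).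
  by rewrite /csat /Hd /Bp /Bm /Bnn /= bp sub0set -setI_eq0 set0I eqxx.
split; apply/forall_inP => r Hr.
  by have := H r Hr; rewrite /satr bodyY_Blits bodyX_Blits; case/andP.
move: Hr; rewrite inE => /andP[Hr /andP[dm bn]].
have := H r Hr; rewrite /satr bodyX_Blits dm bn /= andbT => /andP[_ h].
by rewrite /csat /Hd /Bp /Bm /Bnn /= sub0set -setI_eq0 set0I eqxx !andbT.
Qed.

Lemma ht_htm P X Y : ht P X Y = htm P X Y && (Y \subset sig_prog P).
Proof.
rewrite /ht /htm -csat_reduct.
by case: (X \subset Y); case: (Y \subset sig_prog P); case: [forall r in P, csat Y r];
   case: [forall r in reduct P Y, csat X r].
Qed.

Lemma sig_rule_sub r P : r \in P -> sig_rule r \subset sig_prog P.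
Proof. by move=> Hr; rewrite /sig_prog; apply: (bigcup_sup _ Hr). Qed.

Lemma Hd_sig r : Hd r \subset sig_rule r.
Proof. by rewrite /sig_rule -!setUA subsetUl. Qed.

Lemma minimal_sig P Y : htm P Y Y ->
  [forall X : {set A}, (X \proper Y) ==> ~~ htm P X Y] -> Y \subset sig_prog P.
Proof.
move=> /andP[_ /forall_inP HY] /forallP F.
apply/subsetP => a aY; apply/negPn/negP => na.
have := F (Y :\ a); rewrite properD1 //= /htm subD1set /=.
move/negP; apply; apply/forall_inP => r Hr.
have := HY r Hr; rewrite /satr bodyXYY => /andP[h _]; rewrite h /=.
apply/implyP => /(bodyX_mono (subD1set Y a)); rewrite bodyXYY => /(implyP h).
have naH : a \notin Hd r.
  apply/negP => aH; apply: (negP na); apply: (subsetP (sig_rule_sub Hr)).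
  exact: (subsetP (Hd_sig r)).
suff -> : Hd r :&: (Y :\ a) = Hd r :&: Y by [].
apply/setP => x; rewrite !inE; case: eqP => // ->.
by rewrite (negbTE naH).
Qed.

Lemma AS_htm P Y : (Y \in AS P) =
  htm P Y Y && [forall X : {set A}, (X \proper Y) ==> ~~ htm P X Y].
Proof.
rewrite /AS inE !ht_htm.
apply/idP/idP => [/andP[/andP[h s] /forallP F]|/andP[h F]].
  rewrite h; apply/forallP => X; apply/implyP => pr.
  by have := implyP (F X) pr; rewrite ht_htm s andbT.
have s := minimal_sig h F.
rewrite h s /=; apply/forallP => X; apply/implyP => pr.
by have := implyP (forallP F X) pr; rewrite ht_htm s andbT.
Qed.

Lemma htmU P1 P2 X Y : htm (P1 :|: P2) X Y = htm P1 X Y && htm P2 X Y.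
Proof.
rewrite /htm forall_inU.
by case: (X \subset Y); case: [forall r in P1, satr X Y r]; case: [forall r in P2, satr X Y r].
Qed.

Lemma latom_Blits r l : l \in Blits r -> latom l \in sig_rule r.
Proof.
rewrite /Blits /sig_rule !inE => /orP[/orP[]|] /imsetP[a Ha ->] /=; rewrite ?inE Ha ?orbT //.
Qed.

Lemma litY_restr Y S l : latom l \in S -> litY Y l = litY (Y :&: S) l.
Proof. by case: l => [[a|a]|a] /= aS; rewrite inE aS ?andbT. Qed.
Lemma litX_restr X Y S l : latom l \in S -> litX X Y l = litX (X :&: S) (Y :&: S) l.
Proof. by case: l => [[a|a]|a] /= aS; rewrite inE aS ?andbT. Qed.

Lemma satr_restr X Y S r : sig_rule r \subset S ->
  satr X Y r = satr (X :&: S) (Y :&: S) r.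
Proof.
move=> sS.
have HS : forall l, l \in Blits r -> latom l \in S.
  by move=> l /latom_Blits; apply: (subsetP sS).
have HdS : Hd r \subset S by apply: subset_trans sS; apply: Hd_sig.
have EH : forall Z : {set A}, Hd r :&: Z = Hd r :&: (Z :&: S).
  by move=> Z; rewrite [Z :&: S]setIC setIA (setIidPl HdS).
rewrite /satr -!EH.
have -> : bodyY Y (Blits r) = bodyY (Y :&: S) (Blits r).
  by rewrite /bodyY; apply/forall_inP/forall_inP => H l Hl; have := H l Hl; rewrite (@litY_restr Y S l (HS l Hl)).
have -> // : bodyX X Y (Blits r) = bodyX (X :&: S) (Y :&: S) (Blits r).
by rewrite /bodyX; apply/forall_inP/forall_inP => H l Hl; have := H l Hl; rewrite (@litX_restr X Y S l (HS l Hl)).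
Qed.

Lemma htm_restr P X Y S : sig_prog P \subset S ->
  htm P X Y = (X \subset Y) && htm P (X :&: S) (Y :&: S).
Proof.
move=> sS; rewrite /htm.
have -> : [forall r in P, satr X Y r] = [forall r in P, satr (X :&: S) (Y :&: S) r].
  apply: eq_forallb => r; case Hr: (r \in P) => //=.
  by apply: satr_restr; apply: subset_trans sS; apply: sig_rule_sub.
case sXY: (X \subset Y) => //=.
by rewrite setSI.
Qed.


Lemma neq0_sub (B1 B2 : {set A}) : B1 \subset B2 -> B1 != set0 -> B2 != set0.
Proof. by move=> s /set0Pn[x Hx]; apply/set0Pn; exists x; apply: (subsetP s). Qed.

Lemma bodyY_sub Y L L' : L' \subset L -> bodyY Y L -> bodyY Y L'.
Proof. by move=> s /forall_inP H; apply/forall_inP => l /(subsetP s) /H. Qed.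
Lemma bodyX_sub X Y L L' : L' \subset L -> bodyX X Y L -> bodyX X Y L'.
Proof. by move=> s /forall_inP H; apply/forall_inP => l /(subsetP s) /H. Qed.

Lemma taut_sat X Y r : X \subset Y -> taut r -> satr X Y r.
Proof.
move=> sXY; rewrite /taut /satr bodyY_Blits bodyX_Blits.
case/orP => [/orP[]|] /set0Pn[a]; rewrite inE => /andP[a1 a2].
- apply/andP; split; apply/implyP => /and3P[bp _ _]; apply/set0Pn; exists a;
  by rewrite inE a1 (subsetP bp).
- apply/andP; split; apply/implyP => /and3P[bp dm _].
    by have := subsetP bp a a1; rewrite (disjointFr dm a2).
  by have := subsetP sXY a (subsetP bp a a1); rewrite (disjointFr dm a2).
- apply/andP; split; apply/implyP => /and3P[_ dm bn];
  by have := subsetP bn a a2; rewrite (disjointFr dm a1).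
Qed.

Lemma step23_sat X Y r : X \subset Y -> satr X Y (step23 r) = satr X Y r.
Proof.
move=> sXY.
have EN : forall Z : {set A}, Bp r \subset Z -> ((Bnn r :\: Bp r) \subset Z) = (Bnn r \subset Z).
  move=> Z bp; apply/idP/idP => /subsetP H; apply/subsetP => a Ha.
    by case E: (a \in Bp r); [apply: (subsetP bp) | apply: H; rewrite inE E].
  by apply: H; move: Ha; rewrite inE => /andP[].
have EH : forall Z : {set A}, [disjoint Bm r & Z] -> (Hd r :\: Bm r) :&: Z = Hd r :&: Z.
  move=> Z dm; apply/setP => a; rewrite !inE.
  by case aZ: (a \in Z); rewrite ?andbF // (disjointFl dm aZ).
rewrite /satr !bodyY_Blits !bodyX_Blits.
have -> : Hd (step23 r) = Hd r :\: Bm r by [].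
have -> : Bp (step23 r) = Bp r by [].
have -> : Bm (step23 r) = Bm r by [].
have -> : Bnn (step23 r) = Bnn r :\: Bp r by [].
case bp: (Bp r \subset X).
  have bpY : Bp r \subset Y := subset_trans bp sXY.
  rewrite !EN // bpY /=.
  case dm: [disjoint Bm r & Y] => //=.
  by rewrite !EH //; apply: disjointWr sXY dm.
rewrite /=; case bpY: (Bp r \subset Y) => //=; rewrite EN //=.
by case dm: [disjoint Bm r & Y] => //=; rewrite EH.
Qed.

Lemma dom_sat X Y r r' : Hd r' \subset Hd r -> Blits r' \subset Blits r ->
  satr X Y r' -> satr X Y r.
Proof.
move=> sH sB /andP[h1 h2]; apply/andP; split; apply/implyP => b.
  by apply: (neq0_sub (setSI _ sH)); apply: (implyP h1); apply: bodyY_sub b.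
by apply: (neq0_sub (setSI _ sH)); apply: (implyP h2); apply: bodyX_sub b.
Qed.

Definition dom r' r := (Hd r' \subset Hd r) && (Blits r' \subset Blits r).

Lemma min_dom (P2 : program A) r : r \in P2 ->
  exists2 r', r' \in [set x in P2 | minimal_in P2 x] & dom r' r.
Proof.
move: {2}(#|Hd r| + #|Blits r|) (leqnn (#|Hd r| + #|Blits r|)) => n.
elim: n r => [|n IH] r Hn Hr.
  case: (boolP (minimal_in P2 r)) => [m|].
    by exists r; rewrite ?inE ?Hr ?m // /dom !subxx.
  rewrite /minimal_in negb_forall_in => /exists_inP[r' Hr' /negbNE d].
  by case/orP: d => /andP[a b]; [have := proper_card b | have := proper_card a]; lia.
case: (boolP (minimal_in P2 r)) => [m|].
  by exists r; rewrite ?inE ?Hr ?m // /dom !subxx.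
rewrite /minimal_in negb_forall_in => /exists_inP[r' Hr' /negbNE d].
have Hlt : #|Hd r'| + #|Blits r'| <= n.
  case/orP: d => /andP[a b].
    by have := proper_card b; have := subset_leq_card a; lia.
  by have := proper_card a; have := subset_leq_card b; lia.
have [r2 H2 /andP[d1 d2]] := IH r' Hlt Hr'.
exists r2 => //; case/orP: d => /andP[a b]; rewrite /dom.
  by rewrite (subset_trans d1 a) (subset_trans d2 (proper_sub b)).
by rewrite (subset_trans d1 (proper_sub a)) (subset_trans d2 b).
Qed.

Lemma NF_mem r P : r \in NF P -> exists2 r0, (r0 \in P) && ~~ taut r0 & r = step23 r0.
Proof.
rewrite /NF inE => /andP[/imsetP[r0 H0 ->] _].
by exists r0 => //; move: H0; rewrite inE.
Qed.

Lemma NF_sat P X Y : X \subset Y ->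
  [forall r in NF P, satr X Y r] = [forall r in P, satr X Y r].
Proof.
move=> sXY; apply/forall_inP/forall_inP => H r Hr.
  case: (boolP (taut r)) => t; first exact: taut_sat.
  rewrite -step23_sat //.
  have Hr2 : step23 r \in [set step23 r | r in [set r in P | ~~ taut r]].
    by apply: imset_f; rewrite inE Hr t.
  have [r' Hr' /andP[d1 d2]] := min_dom Hr2.
  by apply: dom_sat d1 d2 _; apply: H.
have [r0 /andP[H0 t] ->] := NF_mem Hr.
by rewrite step23_sat //; apply: H.
Qed.

Lemma htm_NF P X Y : htm (NF P) X Y = htm P X Y.
Proof. by rewrite /htm; case sXY: (X \subset Y) => //=; apply: NF_sat. Qed.

Definition nfr r := [&& [disjoint Hd r & Bp r], [disjoint Hd r & Bm r],
  [disjoint Bp r & Bm r], [disjoint Bnn r & Bp r] & [disjoint Bnn r & Bm r]].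

Lemma NF_nfr P r : r \in NF P -> nfr r.
Proof.
case/NF_mem => r0 /andP[_ t] ->.
move: t; rewrite /taut !negb_or !negbK !setI_eq0 => /andP[/andP[d1 d2] d3].
rewrite /nfr /step23 /Hd /Bp /Bm /Bnn /= -!setI_eq0.
apply/and5P; split; apply/eqP/setP => a; rewrite !inE.
all: case h: (a \in r0.1.1.1); case p: (a \in r0.1.1.2); case m: (a \in r0.1.2);
  case n: (a \in r0.2) => //=.
all: first [ by rewrite (disjointFr d1 h) in p | by rewrite (disjointFr d2 p) in m
           | by rewrite (disjointFr d3 m) in n ].
Qed.

Lemma sig_step23 r : sig_rule (step23 r) \subset sig_rule r.
Proof.
rewrite /sig_rule /step23 /Hd /Bp /Bm /Bnn /=.
apply/subsetP => a; rewrite !inE.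
by case: (a \in r.1.1.1); case: (a \in r.1.1.2); case: (a \in r.1.2); case: (a \in r.2).
Qed.

Lemma sig_NF r P : r \in NF P -> exists2 r0, r0 \in P & sig_rule r \subset sig_rule r0.
Proof. by case/NF_mem => r0 /andP[H0 _] ->; exists r0 => //; apply: sig_step23. Qed.

End Sem.

Section QSem.
Variable A : finType.
Variable q : A.
Implicit Types (X Y Z : {set A}) (r : rule A) (P : program A) (L : {set lit A}).

Lemma mem_Blits_pos r a : (pos a \in Blits r) = (a \in Bp r).
Proof.
rewrite /Blits !in_setU (mem_imset _ _ (@pos_inj A)).
have -> : (pos a \in [set neg x | x in Bm r]) = false by apply/imsetP => -[].
have -> : (pos a \in [set nn x | x in Bnn r]) = false by apply/imsetP => -[].
by rewrite !orbF.
Qed.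
Lemma mem_Blits_neg r a : (neg a \in Blits r) = (a \in Bm r).
Proof.
rewrite /Blits !in_setU (mem_imset _ _ (@neg_inj A)).
have -> : (neg a \in [set pos x | x in Bp r]) = false by apply/imsetP => -[].
have -> : (neg a \in [set nn x | x in Bnn r]) = false by apply/imsetP => -[].
by rewrite orbF.
Qed.
Lemma mem_Blits_nn r a : (nn a \in Blits r) = (a \in Bnn r).
Proof.
rewrite /Blits !in_setU (mem_imset _ _ (@nn_inj A)).
have -> : (nn a \in [set pos x | x in Bp r]) = false by apply/imsetP => -[].
have -> : (nn a \in [set neg x | x in Bm r]) = false by apply/imsetP => -[].
by [].
Qed.

Lemma Bq_atom r l : l \in Bq q r -> latom l != q.
Proof.
rewrite /Bq inE => /andP[nq _]; move: nq; apply: contra.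
by case: l => [[a|a]|a] /= /eqP ->; rewrite !inE eqxx ?orbT.
Qed.

Lemma Bq_sub r : Bq q r \subset Blits r.
Proof. exact: subsetDl. Qed.

Lemma bodyY_qfree Y1 Y2 L : (forall l, l \in L -> latom l != q) ->
  (forall a, a != q -> (a \in Y1) = (a \in Y2)) -> bodyY Y1 L = bodyY Y2 L.
Proof.
move=> HL HY; rewrite /bodyY; apply: eq_forallb => l.
case Hl: (l \in L) => //=; have := HL l Hl.
by case: l Hl => [[a|a]|a] _ /= /HY ->.
Qed.

Lemma bodyX_qfree X1 X2 Y1 Y2 L : (forall l, l \in L -> latom l != q) ->
  (forall a, a != q -> (a \in X1) = (a \in X2)) ->
  (forall a, a != q -> (a \in Y1) = (a \in Y2)) -> bodyX X1 Y1 L = bodyX X2 Y2 L.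
Proof.
move=> HL HX HY; rewrite /bodyX; apply: eq_forallb => l.
case Hl: (l \in L) => //=; have := HL l Hl.
by case: l Hl => [[a|a]|a] _ /= aq; rewrite ?(HX _ aq) ?(HY _ aq).
Qed.

Definition qYr Z r := [&& (q \in Bp r) ==> (q \in Z), (q \in Bm r) ==> (q \notin Z)
  & (q \in Bnn r) ==> (q \in Z)].
Definition qXr X Y r := [&& (q \in Bp r) ==> (q \in X), (q \in Bm r) ==> (q \notin Y)
  & (q \in Bnn r) ==> (q \in Y)].

Lemma bodyY_q Y r : bodyY Y (Blits r) = bodyY Y (Bq q r) && qYr Y r.
Proof.
apply/idP/idP => [H|/andP[/forall_inP H1 /and3P[i1 i2 i3]]].
  rewrite (bodyY_sub (Bq_sub r) H) /=; move/forall_inP: H => H.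
  apply/and3P; split; apply/implyP => Hq.
  - by have := H (pos q); rewrite mem_Blits_pos => /(_ Hq).
  - by have := H (neg q); rewrite mem_Blits_neg => /(_ Hq).
  - by have := H (nn q); rewrite mem_Blits_nn => /(_ Hq).
apply/forall_inP => l Hl; case: (boolP (l \in Bq q r)) => [/H1 //|].
rewrite /Bq inE Hl andbT negbK !inE => /orP[/orP[]|] /eqP El; subst l => /=.
- by apply: (implyP i1); rewrite -mem_Blits_pos.
- by apply: (implyP i2); rewrite -mem_Blits_neg.
- by apply: (implyP i3); rewrite -mem_Blits_nn.
Qed.

Lemma bodyX_q X Y r : bodyX X Y (Blits r) = bodyX X Y (Bq q r) && qXr X Y r.
Proof.
apply/idP/idP => [H|/andP[/forall_inP H1 /and3P[i1 i2 i3]]].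
  rewrite (bodyX_sub (Bq_sub r) H) /=; move/forall_inP: H => H.
  apply/and3P; split; apply/implyP => Hq.
  - by have := H (pos q); rewrite mem_Blits_pos => /(_ Hq).
  - by have := H (neg q); rewrite mem_Blits_neg => /(_ Hq).
  - by have := H (nn q); rewrite mem_Blits_nn => /(_ Hq).
apply/forall_inP => l Hl; case: (boolP (l \in Bq q r)) => [/H1 //|].
rewrite /Bq inE Hl andbT negbK !inE => /orP[/orP[]|] /eqP El; subst l => /=.
- by apply: (implyP i1); rewrite -mem_Blits_pos.
- by apply: (implyP i2); rewrite -mem_Blits_neg.
- by apply: (implyP i3); rewrite -mem_Blits_nn.
Qed.

Lemma Hd_q Z (b : bool) r : q \notin Z ->
  (Hd r :&: (if b then q |: Z else Z) != set0) = (Hq q r :&: Z != set0) || (b && (q \in Hd r)).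
Proof.
move=> qZ; apply/idP/idP.
  case/set0Pn => x; rewrite inE => /andP[xH xZ].
  case: (eqVneq x q) => [Ex|nx].
    subst x; case: b xZ => /=; rewrite ?xH ?orbT // => xZ.
    by rewrite xZ in qZ.
  apply/orP; left; apply/set0Pn; exists x; rewrite !inE nx xH /=.
  by case: b xZ; rewrite // in_setU1 (negbTE nx).
case/orP => [/set0Pn[x]|/andP[-> qH]]; last by apply/set0Pn; exists q; rewrite !inE qH eqxx.
rewrite !inE => /andP[/andP[nx xH] xZ]; apply/set0Pn; exists x.
by case: b; rewrite !inE xH ?xZ ?orbT.
Qed.

Definition Yb Y (b : bool) := if b then q |: Y else Y.

Lemma mem_Yb Y (b : bool) a : a != q -> (a \in Yb Y b) = (a \in Y).
Proof. by move=> aq; case: b; rewrite /Yb // in_setU1 (negbTE aq). Qed.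
Lemma q_Yb Y (b : bool) : q \notin Y -> (q \in Yb Y b) = b.
Proof. by move=> qY; case: b; rewrite /Yb ?setU11 ?(negbTE qY). Qed.

Lemma satr_q X Y r (a b : bool) : q \notin X -> q \notin Y ->
  satr (Yb X a) (Yb Y b) r =
  ((bodyY Y (Bq q r) && [&& (q \in Bp r) ==> b, (q \in Bm r) ==> ~~ b & (q \in Bnn r) ==> b])
     ==> ((Hq q r :&: Y != set0) || b && (q \in Hd r))) &&
  ((bodyX X Y (Bq q r) && [&& (q \in Bp r) ==> a, (q \in Bm r) ==> ~~ b & (q \in Bnn r) ==> b])
     ==> ((Hq q r :&: X != set0) || a && (q \in Hd r))).
Proof.
move=> qX qY; rewrite /satr bodyY_q bodyX_q /Yb !Hd_q // -!/(Yb _ _).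
rewrite /qYr /qXr !q_Yb //.
rewrite (@bodyY_qfree (Yb Y b) Y); last by move=> c; apply: mem_Yb.
  rewrite (@bodyX_qfree (Yb X a) X (Yb Y b) Y) //; first by move=> l; apply: Bq_atom.
    by move=> c; apply: mem_Yb.
  by move=> c; apply: mem_Yb.
by move=> l; apply: Bq_atom.
Qed.

End QSem.

Section Rules.
Variable A : finType.
Variable q : A.
Implicit Types (X Y Z H : {set A}) (r : rule A) (P Q : program A) (L D : {set lit A}).

Definition bq Y r := bodyY Y (Bq q r).
Definition bqx X Y r := bodyX X Y (Bq q r).
Definition hq Z r := Hq q r :&: Z != set0.

Lemma satr_mk X Y h L : satr X Y (mkrule h L) =
  (bodyY Y L ==> (h :&: Y != set0)) && (bodyX X Y L ==> (h :&: X != set0)).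
Proof. by rewrite /satr Blits_mkrule. Qed.

Lemma headU H1 H2 Z : ((H1 :|: H2) :&: Z != set0) = (H1 :&: Z != set0) || (H2 :&: Z != set0).
Proof. by rewrite setIUl setU_eq0 negb_and. Qed.
Lemma nposU Y H1 H2 : nbodyY Y (posS (H1 :|: H2)) = nbodyY Y (posS H1) && nbodyY Y (posS H2).
Proof. by rewrite !nbodyY_posS setIUl setU_eq0. Qed.
Lemma npos_hq Y r : nbodyY Y (posS (Hq q r)) = ~~ hq Y r.
Proof. by rewrite nbodyY_posS /hq negbK. Qed.

Lemma Hq_id r : q \in Hd r = false -> Hq q r = Hd r.
Proof. by move=> h; apply/setP => x; rewrite /Hq !inE; case: eqP => // ->; rewrite h. Qed.

Lemma Bq_id r : q \in Bp r = false -> q \in Bm r = false -> q \in Bnn r = false -> Bq q r = Blits r.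
Proof.
move=> p m n; apply/setP => l; rewrite /Bq inE.
case El: (l \in [set pos q; neg q; nn q]) => //=.
have [->|[->|->]] : l = pos q \/ l = neg q \/ l = nn q.
  by move: El; rewrite !inE => /orP[/orP[]|] /eqP ->; auto.
- by rewrite mem_Blits_pos p.
- by rewrite mem_Blits_neg m.
- by rewrite mem_Blits_nn n.
Qed.

Lemma Dq_bodyX Q X Y D : Dq q Q D -> bodyX X Y D = bodyY Y D.
Proof.
by case=> Q1 [l [_ _ _ ->]]; rewrite bodyXU bodyYU bodyX_notS bodyY_notS bodyX_nnS bodyY_nnS.
Qed.

Lemma Dq_sound Q Y D : Dq q Q D -> bodyY Y D -> forall r, r \in Q -> ~~ bq Y r || hq Y r.
Proof.
case=> Q1 [l [sQ H1 H2 ->]].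
rewrite bodyYU bodyY_notS bodyY_nnS => /andP[/forall_inP N /forall_inP B] r Hr.
case: (boolP (r \in Q1)) => rQ1.
  have := N (l r) (imset_f l rQ1); have lB := H1 r rQ1.
  move=> nl; apply/orP; left; apply/negP => /forall_inP Hall.
  by have := Hall _ lB; rewrite (negbTE nl).
have rD : r \in Q :\: Q1 by rewrite inE rQ1 Hr.
have := B (l r) (imset_f l rD); have := H2 r rD; rewrite /posS => /imsetP[h hH ->] /= hY.
by apply/orP; right; apply/set0Pn; exists h; rewrite in_setI hH hY.
Qed.

Lemma Dq_complete Q Y : (forall r, r \in Q -> ~~ bq Y r || hq Y r) ->
  exists2 D, Dq q Q D & bodyY Y D.
Proof.
move=> HQ.
pose l r := if ~~ bq Y r then (if [pick l in Bq q r | ~~ litY Y l] is Some l then l else pos q)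
            else (if [pick h in Hq q r :&: Y] is Some h then pos h else pos q).
pose Q1 := [set r in Q | ~~ bq Y r].
have L1 : forall r, r \in Q1 -> (l r \in Bq q r) && ~~ litY Y (l r).
  move=> r; rewrite inE => /andP[_ nb]; rewrite /l nb.
  case: pickP => [l0 /andP[-> ->] //|none].
  move: nb; rewrite /bq /bodyY negb_forall_in => /exists_inP[l0 l0B nl0].
  by have := none l0; rewrite l0B nl0.
have L2 : forall r, r \in Q :\: Q1 -> exists2 h, l r = pos h & h \in Hq q r :&: Y.
  move=> r; rewrite !inE => /andP[nq rQ]; rewrite rQ /= negbK in nq.
  have := HQ r rQ; rewrite nq /= => /set0Pn[h0 Hh0].
  rewrite /l nq /=; case: pickP => [h Hh|none]; first by exists h.
  by have := none h0; rewrite Hh0.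
exists (notS (l @: Q1) :|: nnS (l @: (Q :\: Q1))).
  exists Q1, l; split => //.
  - by apply/subsetP => r; rewrite inE => /andP[].
  - by move=> r /L1 /andP[].
  - by move=> r /L2 [h -> Hh]; apply: imset_f; move: Hh; rewrite in_setI => /andP[].
rewrite bodyYU bodyY_notS bodyY_nnS; apply/andP; split.
  by rewrite /nbodyY forall_in_imset; apply/forall_inP => r /L1 /andP[].
rewrite /bodyY forall_in_imset; apply/forall_inP => r /L2 [h -> Hh] /=.
by move: Hh; rewrite in_setI => /andP[].
Qed.

Lemma side_cond Y D L : bodyY Y D -> bodyY Y L -> D :&: notS L = set0.
Proof.
move=> /forall_inP HD /forall_inP HL; apply/setP => l; rewrite inE in_set0.
apply/andP => -[lD /imsetP[l' l'L El]].
by have := HD l lD; rewrite El litY_notl (HL l' l'L).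
Qed.

End Rules.

Section RuleEval.
Variable A : finType.
Variable q : A.
Implicit Types (X Y Z H : {set A}) (r : rule A) (P Q : program A) (L D : {set lit A}).

Local Notation bY Y r := (bq q Y r).
Local Notation bX X Y r := (bqx q X Y r).
Local Notation hY Z r := (hq q Z r).

Ltac evalr := rewrite satr_mk;
  rewrite !(bodyYU, bodyXU, bodyY_notS, bodyX_notS, bodyY_nnS, bodyX_nnS, nposU, npos_hq,
            headU, bodyY1, bodyX1) /=.

Lemma E1a X Y r0 r4 : q \in Hd r0 = false -> Bq q r4 = Blits r4 ->
  satr X Y (mkrule (Hd r0 :|: Hq q r4) (Bq q r0 :|: Blits r4)) =
  ((bY Y r0 && bY Y r4) ==> (hY Y r0 || hY Y r4)) &&
  ((bX X Y r0 && bX X Y r4) ==> (hY X r0 || hY X r4)).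
Proof. by move=> h0 b4; rewrite -(Hq_id h0) -b4; evalr. Qed.

Lemma E1b X Y r2 r4 : q \in Hd r2 = false -> Bq q r4 = Blits r4 ->
  satr X Y (mkrule (Hd r2) (Bq q r2 :|: notS (posS (Hq q r4)) :|: nnS (Blits r4))) =
  (((bY Y r2 && ~~ hY Y r4) && bY Y r4) ==> hY Y r2) &&
  (((bX X Y r2 && ~~ hY Y r4) && bY Y r4) ==> hY X r2).
Proof. by move=> h0 b4; rewrite -(Hq_id h0) -b4; evalr. Qed.

Lemma E2a X Y r0 r3 r' : q \in Hd r0 = false ->
  satr X Y (mkrule (Hd r0 :|: Hq q r3)
       (Bq q r0 :|: Bq q r3 :|: notS (posS (Hq q r')) :|: nnS (Bq q r'))) =
  ((((bY Y r0 && bY Y r3) && ~~ hY Y r') && bY Y r') ==> (hY Y r0 || hY Y r3)) &&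
  ((((bX X Y r0 && bX X Y r3) && ~~ hY Y r') && bY Y r') ==> (hY X r0 || hY X r3)).
Proof. by move=> h0; rewrite -(Hq_id h0); evalr. Qed.

Lemma E3a X Y r0 r3 h D Q : q \in Hd r0 = false -> Dq q Q D ->
  satr X Y (mkrule (Hd r0)
       (Bq q r0 :|: [set nn h] :|: D :|: Bq q r3 :|: notS (posS (Hq q r3)))) =
  (((((bY Y r0 && (h \in Y)) && bodyY Y D) && bY Y r3) && ~~ hY Y r3) ==> hY Y r0) &&
  (((((bX X Y r0 && (h \in Y)) && bodyY Y D) && bX X Y r3) && ~~ hY Y r3) ==> hY X r0).
Proof. by move=> h0 HD; rewrite -(Hq_id h0); evalr; rewrite (Dq_bodyX _ _ HD). Qed.

Lemma E2b X Y r2 r3 r' : q \in Hd r2 = false ->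
  satr X Y (mkrule (Hd r2) (Bq q r2 :|: notS (posS (Hq q r3 :|: Hq q r'))
                :|: nnS (Bq q r3 :|: Bq q r'))) =
  (((bY Y r2 && (~~ hY Y r3 && ~~ hY Y r')) && (bY Y r3 && bY Y r')) ==> hY Y r2) &&
  (((bX X Y r2 && (~~ hY Y r3 && ~~ hY Y r')) && (bY Y r3 && bY Y r')) ==> hY X r2).
Proof. by move=> h0; rewrite -(Hq_id h0); evalr. Qed.

Lemma E3b X Y r2 r3 h D Q : q \in Hd r2 = false -> Dq q Q D ->
  satr X Y (mkrule (Hd r2)
       (Bq q r2 :|: notS (posS (Hq q r3)) :|: nnS (Bq q r3 :|: [set pos h]) :|: D)) =
  ((((bY Y r2 && ~~ hY Y r3) && (bY Y r3 && (h \in Y))) && bodyY Y D) ==> hY Y r2) &&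
  ((((bX X Y r2 && ~~ hY Y r3) && (bY Y r3 && (h \in Y))) && bodyY Y D) ==> hY X r2).
Proof. by move=> h0 HD; rewrite -(Hq_id h0); evalr; rewrite (Dq_bodyX _ _ HD). Qed.

Lemma E4 X Y r' D Q : Dq q Q D ->
  satr X Y (mkrule (Hq q r') (Bq q r' :|: D)) =
  ((bY Y r' && bodyY Y D) ==> hY Y r') && ((bX X Y r' && bodyY Y D) ==> hY X r').
Proof. by move=> HD; evalr; rewrite (Dq_bodyX _ _ HD). Qed.

Lemma E5 X Y r' r3 r D Q : q \in Hd r = false -> Dq q Q D ->
  satr X Y (mkrule (Hq q r') (Bq q r' :|: notS (posS (Hd r :|: Hq q r3))
                :|: nnS (Bq q r :|: Bq q r3) :|: D)) =
  ((((bY Y r' && (~~ hY Y r && ~~ hY Y r3)) && (bY Y r && bY Y r3)) && bodyY Y D) ==> hY Y r') &&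
  ((((bX X Y r' && (~~ hY Y r && ~~ hY Y r3)) && (bY Y r && bY Y r3)) && bodyY Y D) ==> hY X r').
Proof. by move=> h0 HD; rewrite -(Hq_id h0); evalr; rewrite (Dq_bodyX _ _ HD). Qed.

Lemma E6 X Y r' r3 h D Q : Dq q Q D ->
  satr X Y (mkrule (Hq q r')
       (Bq q r' :|: notS (posS (Hq q r3)) :|: nnS (Bq q r3 :|: [set pos h]) :|: D)) =
  ((((bY Y r' && ~~ hY Y r3) && (bY Y r3 && (h \in Y))) && bodyY Y D) ==> hY Y r') &&
  ((((bX X Y r' && ~~ hY Y r3) && (bY Y r3 && (h \in Y))) && bodyY Y D) ==> hY X r').
Proof. by move=> HD; evalr; rewrite (Dq_bodyX _ _ HD). Qed.

Lemma E7 X Y r0 r3 r3' D h Q : q \in Hd r0 = false -> Dq q Q D ->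
  satr X Y (mkrule (Hd r0 :|: Hq q r3)
       (Bq q r0 :|: Bq q r3 :|: notS (posS (Hq q r3'))
                :|: nnS (Bq q r3' :|: [set pos h]) :|: D)) =
  (((((bY Y r0 && bY Y r3) && ~~ hY Y r3') && (bY Y r3' && (h \in Y))) && bodyY Y D)
     ==> (hY Y r0 || hY Y r3)) &&
  (((((bX X Y r0 && bX X Y r3) && ~~ hY Y r3') && (bY Y r3' && (h \in Y))) && bodyY Y D)
     ==> (hY X r0 || hY X r3)).
Proof. by move=> h0 HD; rewrite -(Hq_id h0); evalr; rewrite (Dq_bodyX _ _ HD). Qed.

End RuleEval.

Section Main.
Variable A : finType.
Variable P : program A.
Variable q : A.
Implicit Types (X Y Z H : {set A}) (r : rule A) (Q : program A) (L D : {set lit A}).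

Local Notation P' := (NF P).
Local Notation bY Y r := (bq q Y r).
Local Notation bX X Y r := (bqx q X Y r).
Local Notation hY Z r := (hq q Z r).

Definition F2 := [set x | (x \in Rq P' q) || `[< new_rule P' q x >]].

Lemma fSP_F2 : fSP P q = NF F2. Proof. by []. Qed.

Variant cls r : Prop :=
 | ClsQ of r \in Rq P' q & q \in Hd r = false & q \in Bp r = false & q \in Bm r = false & q \in Bnn r = false
 | Cls0 of r \in R0 P' q & q \in Hd r = false & q \in Bp r = true & q \in Bm r = false & q \in Bnn r = false
 | Cls1 of r \in R1 P' q & q \in Hd r = false & q \in Bp r = false & q \in Bm r = true & q \in Bnn r = false
 | Cls2 of r \in R2 P' q & q \in Hd r = false & q \in Bp r = false & q \in Bm r = false & q \in Bnn r = true
 | Cls3 of r \in R3 P' q & q \in Hd r = true & q \in Bp r = false & q \in Bm r = false & q \in Bnn r = true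
 | Cls4 of r \in R4 P' q & q \in Hd r = true & q \in Bp r = false & q \in Bm r = false & q \in Bnn r = false.

Lemma clsP r : r \in P' -> cls r.
Proof.
move=> Hr; have := NF_nfr Hr; case/and5P => d1 d2 d3 d4 d5.
case h: (q \in Hd r); case p: (q \in Bp r); case m: (q \in Bm r); case n: (q \in Bnn r);
  try (by rewrite (disjointFr d1 h) in p); try (by rewrite (disjointFr d2 h) in m);
  try (by rewrite (disjointFr d3 p) in m); try (by rewrite (disjointFr d4 n) in p);
  try (by rewrite (disjointFr d5 n) in m).
- by apply: Cls3; rewrite // inE Hr /= n h.
- by apply: Cls4; rewrite // inE Hr /= n h.
- by apply: Cls0; rewrite // inE Hr /= p.
- by apply: Cls1; rewrite // inE Hr /= m.
- by apply: Cls2; rewrite // inE Hr /= n h.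
- by apply: ClsQ; rewrite // inE Hr /= /sig_rule !inE h p m n.
Qed.

Lemma R0F r : r \in R0 P' q -> r \in P' /\ cls r.
Proof. by rewrite inE => /andP[Hr _]; split => //; apply: clsP. Qed.

Lemma inR_P r : (r \in R0 P' q) || (r \in R1 P' q) || (r \in R2 P' q) || (r \in R3 P' q) ||
  (r \in R4 P' q) || (r \in Rq P' q) -> r \in P'.
Proof. by rewrite !inE -!andb_orr => /andP[]. Qed.

Ltac facts H := let Hc := fresh "Hc" in
  have Hc : r \in P' by apply: inR_P; rewrite H ?orbT.

Lemma R0c r : r \in R0 P' q ->
  [/\ r \in P', q \in Hd r = false, q \in Bp r = true, q \in Bm r = false & q \in Bnn r = false].
Proof.
rewrite inE => /andP[Hr c].
by case: (clsP Hr) => _ h p m n; move: c; rewrite ?h ?p ?m ?n.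
Qed.
Lemma R1c r : r \in R1 P' q ->
  [/\ r \in P', q \in Hd r = false, q \in Bp r = false, q \in Bm r = true & q \in Bnn r = false].
Proof.
rewrite inE => /andP[Hr c].
by case: (clsP Hr) => _ h p m n; move: c; rewrite ?h ?p ?m ?n.
Qed.
Lemma R2c r : r \in R2 P' q ->
  [/\ r \in P', q \in Hd r = false, q \in Bp r = false, q \in Bm r = false & q \in Bnn r = true].
Proof.
rewrite inE => /andP[Hr c].
by case: (clsP Hr) => _ h p m n; move: c; rewrite ?h ?p ?m ?n.
Qed.
Lemma R3c r : r \in R3 P' q ->
  [/\ r \in P', q \in Hd r = true, q \in Bp r = false, q \in Bm r = false & q \in Bnn r = true].
Proof.
rewrite inE => /andP[Hr c].
by case: (clsP Hr) => _ h p m n; move: c; rewrite ?h ?p ?m ?n.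
Qed.
Lemma R4c r : r \in R4 P' q ->
  [/\ r \in P', q \in Hd r = true, q \in Bp r = false, q \in Bm r = false & q \in Bnn r = false].
Proof.
rewrite inE => /andP[Hr c].
by case: (clsP Hr) => _ h p m n; move: c; rewrite ?h ?p ?m ?n.
Qed.

Lemma Rqc r : r \in Rq P' q ->
  [/\ r \in P', q \in Hd r = false, q \in Bp r = false, q \in Bm r = false & q \in Bnn r = false].
Proof.
rewrite inE => /andP[Hr c].
by case: (clsP Hr) => H h p m n; rewrite /sig_rule !inE ?h ?p ?m ?n /= ?orbT in c.
Qed.

Lemma satr_q' X Y r (a b : bool) : q \notin X -> q \notin Y ->
  satr (Yb q X a) (Yb q Y b) r =
  ((bY Y r && [&& (q \in Bp r) ==> b, (q \in Bm r) ==> ~~ b & (q \in Bnn r) ==> b])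
     ==> (hY Y r || b && (q \in Hd r))) &&
  ((bX X Y r && [&& (q \in Bp r) ==> a, (q \in Bm r) ==> ~~ b & (q \in Bnn r) ==> b])
     ==> (hY X r || a && (q \in Hd r))).
Proof. exact: satr_q. Qed.

Lemma bqxYY Y r : bX Y Y r = bY Y r.
Proof. exact: bodyXYY. Qed.

Definition sat2 Z Y (a b : bool) := [forall r in P', satr (Yb q Z a) (Yb q Y b) r].

Lemma nrq x : x \in Rq P' q -> x \in F2.
Proof. by move=> H; rewrite inE H. Qed.

Ltac nr_intro := rewrite inE; apply/orP; right; apply/asboolP.

Lemma nr1a r0 r4 : r0 \in R0 P' q -> r4 \in R4 P' q ->
  mkrule (Hd r0 :|: Hq q r4) (Bq q r0 :|: Blits r4) \in F2.
Proof. by move=> H0 H4; nr_intro; left; exists r0, r4. Qed.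
Lemma nr2a r0 r3 r' : r0 \in R0 P' q -> r3 \in R3 P' q -> r' \in R1 P' q :|: R4 P' q ->
  mkrule (Hd r0 :|: Hq q r3)
       (Bq q r0 :|: Bq q r3 :|: notS (posS (Hq q r'))  :|: nnS (Bq q r')) \in F2.
Proof. by move=> H0 H3 H'; nr_intro; right; left; exists r0, r3, r'. Qed.
Lemma nr3a r0 r3 h D : r0 \in R0 P' q -> r3 \in R3 P' q -> h \in Hd r0 ->
  Dq q ((R0 P' q :|: R2 P' q) :\ r0) D ->
  mkrule (Hd r0) (Bq q r0 :|: [set nn h] :|: D :|: Bq q r3 :|: notS (posS (Hq q r3))) \in F2.
Proof. by move=> H0 H3 Hh HD; nr_intro; do 2 right; left; exists r0, r3, h, D. Qed.
Lemma nr1b r2 r4 : r2 \in R2 P' q -> r4 \in R4 P' q ->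
  mkrule (Hd r2) (Bq q r2 :|: notS (posS (Hq q r4)) :|: nnS (Blits r4)) \in F2.
Proof. by move=> H0 H4; nr_intro; do 3 right; left; exists r2, r4. Qed.
Lemma nr2b r2 r3 r' : r2 \in R2 P' q -> r3 \in R3 P' q -> r' \in R1 P' q :|: R4 P' q ->
  mkrule (Hd r2) (Bq q r2 :|: notS (posS (Hq q r3 :|: Hq q r'))
                :|: nnS (Bq q r3 :|: Bq q r')) \in F2.
Proof. by move=> H0 H3 H'; nr_intro; do 4 right; left; exists r2, r3, r'. Qed.
Lemma nr3b r2 r3 h D : r2 \in R2 P' q -> r3 \in R3 P' q -> h \in Hd r2 ->
  Dq q ((R0 P' q :|: R2 P' q) :\ r2) D ->
  mkrule (Hd r2) (Bq q r2 :|: notS (posS (Hq q r3)) :|: nnS (Bq q r3 :|: [set pos h]) :|: D)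
    \in F2.
Proof. by move=> H0 H3 Hh HD; nr_intro; do 5 right; left; exists r2, r3, h, D. Qed.
Lemma nr4 r' D : r' \in R1 P' q :|: R4 P' q -> Dq q (R3 P' q :|: R4 P' q) D ->
  D :&: notS (Bq q r') = set0 -> mkrule (Hq q r') (Bq q r' :|: D) \in F2.
Proof. by move=> H' HD Hs; nr_intro; do 6 right; left; exists r', D. Qed.
Lemma nr5 r' r3 r D : r' \in R1 P' q :|: R4 P' q -> r3 \in R3 P' q -> r \in R0 P' q :|: R2 P' q ->
  Dq q (R4 P' q) D -> D :&: notS (Bq q r') = set0 ->
  mkrule (Hq q r') (Bq q r' :|: notS (posS (Hd r :|: Hq q r3))
                :|: nnS (Bq q r :|: Bq q r3) :|: D) \in F2.
Proof. by move=> H' H3 H HD Hs; nr_intro; do 7 right; left; exists r', r3, r, D. Qed.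
Lemma nr6 r' r3 h D : r' \in R1 P' q :|: R4 P' q -> r3 \in R3 P' q -> h \in Hq q r' ->
  Dq q ((R1 P' q :|: R4 P' q) :\ r') D ->
  mkrule (Hq q r')
       (Bq q r' :|: notS (posS (Hq q r3)) :|: nnS (Bq q r3 :|: [set pos h]) :|: D) \in F2.
Proof. by move=> H' H3 Hh HD; nr_intro; do 8 right; left; exists r', r3, h, D. Qed.
Lemma nr7 r0 r3 r3' D h : r0 \in R0 P' q -> r3 \in R3 P' q -> r3' \in R3 P' q -> r3 != r3' ->
  Dq q ((R0 P' q :|: R2 P' q) :\ r0) D -> h \in Hd r0 ->
  mkrule (Hd r0 :|: Hq q r3)
       (Bq q r0 :|: Bq q r3 :|: notS (posS (Hq q r3'))
                :|: nnS (Bq q r3' :|: [set pos h]) :|: D) \in F2.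
Proof. by move=> H0 H3 H3' Hn HD Hh; nr_intro; do 9 right; exists r0, r3, r3', D, h. Qed.



Ltac bs := rewrite /= ?(andbT, andbF, orbF, orbT, implybT, implyTb, implyFb, implybF) /=; try done.

Lemma SCb Y : q \notin Y -> (forall x, x \in F2 -> satr Y Y x) ->
  exists b : bool, sat2 Y Y b b && (b ==> ~~ sat2 Y Y false true).
Proof.
move=> qY HF.
have HF0 : forall x, x \in F2 -> satr (Yb q Y false) (Yb q Y false) x := HF.
case: (boolP (sat2 Y Y false false)) => M0; first by exists false; rewrite M0.
exists true; rewrite /=.
move: M0; rewrite /sat2 negb_forall_in => /exists_inP[r' Hr' nr'].
have [R1r' br' hr'] : [/\ r' \in R1 P' q :|: R4 P' q, bY Y r' & ~~ hY Y r'].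
  case: (clsP Hr') nr' => Hc h p m n; rewrite satr_q' // h p m n bqxYY; bs.
  - by have := HF0 r' (nrq Hc); rewrite satr_q' // h p m n bqxYY; bs => ->.
  - by case: (bY Y r'); case: (hY Y r') => //= _; split => //; rewrite inE Hc.
  - by case: (bY Y r'); case: (hY Y r') => //= _; split => //; rewrite inE Hc orbT.
have [s Hs /andP[bYs hYs]] : exists2 s, s \in R3 P' q :|: R4 P' q & bY Y s && ~~ hY Y s.
  case: (boolP [exists s in R3 P' q :|: R4 P' q, bY Y s && ~~ hY Y s]) => [/exists_inP[s ? ?]|none].
    by exists s.
  have [D HD bD] : exists2 D, Dq q (R3 P' q :|: R4 P' q) D & bodyY Y D.
    apply: Dq_complete => s Hs; move: none; rewrite negb_exists_in => /forall_inP /(_ s Hs).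
    by rewrite negb_and negbK.
  have := HF _ (nr4 R1r' HD (side_cond bD br')).
  by rewrite (E4 Y Y r' HD) br' bD /= (negbTE hr').
apply/andP; split.
  apply/forall_inP => r Hr; case: (clsP Hr) => Hc h p m n; rewrite satr_q' // h p m n bqxYY; bs.
  - by have := HF0 r (nrq Hc); rewrite satr_q' // h p m n bqxYY; bs.
  - suff H : bY Y r ==> hY Y r by rewrite H.
    apply/implyP => bYr; case nh: (hY Y r) => //.
    case/setUP: Hs => Hs.
      have := HF _ (nr2a Hc Hs R1r'); rewrite (E2a Y Y s r' h) bYr bYs br' hr' nh.
      by rewrite (negbTE hYs).
    have [_ h4 p4 m4 n4] := R4c Hs.
    have := HF _ (nr1a Hc Hs); rewrite (E1a Y Y h (Bq_id p4 m4 n4)) bYr bYs nh.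
    by rewrite (negbTE hYs).
  - suff H : bY Y r ==> hY Y r by rewrite H.
    apply/implyP => bYr; case nh: (hY Y r) => //.
    case/setUP: Hs => Hs.
      have := HF _ (nr2b Hc Hs R1r'); rewrite (E2b Y Y s r' h) bYr bYs br' hr' nh.
      by rewrite hYs.
    have [_ h4 p4 m4 n4] := R4c Hs.
    have := HF _ (nr1b Hc Hs); rewrite (E1b Y Y h (Bq_id p4 m4 n4)) bYr bYs nh.
    by rewrite hYs.
apply/negP => /forall_inP H.
case/setUP: Hs => Hs.
  have [Ps h4 p4 m4 n4] := R3c Hs.
  by have := H s Ps; rewrite satr_q' // h4 p4 m4 n4 bqxYY bYs (negbTE hYs); bs.
have [Ps h4 p4 m4 n4] := R4c Hs.
by have := H s Ps; rewrite satr_q' // h4 p4 m4 n4 bqxYY bYs (negbTE hYs); bs.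
Qed.


Lemma pickH Z r : hq q Z r -> exists2 h, h \in Hd r & h \in Z /\ h \in Hq q r.
Proof.
case/set0Pn => h; rewrite in_setI => /andP[hH hZ]; exists h; last by [].
by move: hH; rewrite /Hq in_setD1 => /andP[].
Qed.

Lemma SCa0X X Y r : q \notin Y -> X \subset Y -> (forall x, x \in F2 -> satr X Y x) ->
  sat2 Y Y false false -> r \in R1 P' q :|: R4 P' q -> bX X Y r -> hY Y r -> hY X r.
Proof.
move=> qY sXY HF M R14 bXr hYr.
have qX : q \notin X by apply: contra qY; apply: (subsetP sXY).
have bYr : bY Y r by apply: bodyXY bXr.
case nh: (hY X r) => //.
case: (boolP [exists s in R3 P' q :|: R4 P' q, bY Y s && ~~ hY Y s]) =>
       [/exists_inP[s Hs /andP[bYs hYs]]|none].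
  case/setUP: Hs => Hs; last first.
    have [Ps h4 p4 m4 n4] := R4c Hs.
    by have := forall_inP M s Ps; rewrite satr_q' // h4 p4 m4 n4 bqxYY bYs (negbTE hYs); bs.
  have [h' h'H [h'Y h'Hq]] := pickH hYr.
  have [D HD bD] : exists2 D, Dq q ((R1 P' q :|: R4 P' q) :\ r) D & bodyY Y D.
    apply: Dq_complete => r2; rewrite in_setD1 => /andP[_ /setUP[] Hr2].
      have [Pr2 h2 p2 m2 n2] := R1c Hr2.
      have := forall_inP M r2 Pr2; rewrite satr_q' // h2 p2 m2 n2 bqxYY; bs.
      by case: (bY Y r2); case: (hY Y r2).
    have [Pr2 h2 p2 m2 n2] := R4c Hr2.
    have := forall_inP M r2 Pr2; rewrite satr_q' // h2 p2 m2 n2 bqxYY; bs.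
    by case: (bY Y r2); case: (hY Y r2).
  have := HF _ (nr6 R14 Hs h'Hq HD).
  by rewrite (E6 X Y r s h' HD) bXr bYr hYr (negbTE hYs) bYs h'Y bD nh.
have [D HD bD] : exists2 D, Dq q (R3 P' q :|: R4 P' q) D & bodyY Y D.
  apply: Dq_complete => s Hs; move: none; rewrite negb_exists_in => /forall_inP /(_ s Hs).
  by rewrite negb_and negbK.
have := HF _ (nr4 R14 HD (side_cond bD bYr)).
by rewrite (E4 X Y r HD) bXr bYr hYr bD nh.
Qed.

Lemma SCa0 X Y : q \notin Y -> X \subset Y -> (forall x, x \in F2 -> satr X Y x) ->
  sat2 Y Y false false -> sat2 X Y false false.
Proof.
move=> qY sXY HF M.
have qX : q \notin X by apply: contra qY; apply: (subsetP sXY).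
have HF0 : forall x, x \in F2 -> satr (Yb q X false) (Yb q Y false) x := HF.
apply/forall_inP => r Hr; case: (clsP Hr) => Hc h p m n; rewrite satr_q' // h p m n; bs.
- by have := HF0 r (nrq Hc); rewrite satr_q' // h p m n; bs.
all: have := forall_inP M r Hr; rewrite satr_q' // h p m n bqxYY; bs => /andP[YP _].
all: rewrite YP /=; apply/implyP => bXr.
all: apply: (SCa0X qY sXY HF M) => //; first by rewrite inE Hc ?orbT.
all: by apply: (implyP YP); apply: bodyXY bXr.
Qed.


Lemma RYl Y r : q \notin Y -> sat2 Y Y true true -> r \in R0 P' q :|: R2 P' q ->
  bY Y r -> hY Y r.
Proof.
move=> qY M1; case/setUP => Hr.
  have [Pr h p m n] := R0c Hr.
  by have := forall_inP M1 r Pr; rewrite satr_q' // h p m n bqxYY; bs => /andP[/implyP].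
have [Pr h p m n] := R2c Hr.
by have := forall_inP M1 r Pr; rewrite satr_q' // h p m n bqxYY; bs => /andP[/implyP].
Qed.

Lemma Dq02 Y r0 : q \notin Y -> sat2 Y Y true true ->
  exists2 D, Dq q ((R0 P' q :|: R2 P' q) :\ r0) D & bodyY Y D.
Proof.
move=> qY M1; apply: Dq_complete => r; rewrite in_setD1 => /andP[_ Hr].
by case bYr: (bY Y r) => //=; apply: RYl bYr.
Qed.

Set Bullet Behavior "Strict Subproofs".

Lemma supp Y : q \notin Y -> sat2 Y Y true true -> ~~ sat2 Y Y false true ->
  exists2 s, s \in R3 P' q :|: R4 P' q & bY Y s && ~~ hY Y s.
Proof.
move=> qY M1; rewrite /sat2 negb_forall_in => /exists_inP[s Ps ns]; exists s.
- case: (clsP Ps) ns => Hc h p m n; rewrite satr_q' // h p m n bqxYY; bs.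
  all: try (by rewrite inE Hc ?orbT).
  all: have := forall_inP M1 s Ps; rewrite satr_q' // h p m n bqxYY; bs.
  all: by case: (bY Y s); case: (hY Y s).
- case: (clsP Ps) ns => Hc h p m n; rewrite satr_q' // h p m n bqxYY; bs.
  all: try (by case: (bY Y s); case: (hY Y s)).
  all: have := forall_inP M1 s Ps; rewrite satr_q' // h p m n bqxYY; bs.
  all: by case: (bY Y s); case: (hY Y s).
Qed.

Lemma R2X X Y r s : q \notin Y -> X \subset Y -> (forall x, x \in F2 -> satr X Y x) ->
  sat2 Y Y true true -> s \in R3 P' q :|: R4 P' q -> bY Y s -> ~~ hY Y s ->
  r \in R2 P' q -> bX X Y r -> hY X r.
Proof.
move=> qY sXY HF M1 Hs bYs hYs Hr bXr.
have bYr : bY Y r by apply: bodyXY bXr.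
have hYr : hY Y r by apply: RYl bYr => //; rewrite inE Hr orbT.
have [Pr h p m n] := R2c Hr.
case nh: (hY X r) => //.
case/setUP: Hs => Hs.
  have [h' h'H [h'Y h'Hq]] := pickH hYr.
  have [D HD bD] := Dq02 r qY M1.
  have := HF _ (nr3b Hr Hs h'H HD).
  by rewrite (E3b X Y s h' h HD) bXr bYr hYr (negbTE hYs) bYs h'Y bD nh.
have [Ps h4 p4 m4 n4] := R4c Hs.
have := HF _ (nr1b Hr Hs).
by rewrite (E1b X Y h (Bq_id p4 m4 n4)) bXr bYr hYr (negbTE hYs) bYs nh.
Qed.

Lemma R34X X Y r0 r s : q \notin Y -> X \subset Y -> (forall x, x \in F2 -> satr X Y x) ->
  sat2 Y Y true true -> s \in R3 P' q :|: R4 P' q -> bY Y s -> ~~ hY Y s ->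
  r0 \in R0 P' q -> bX X Y r0 -> ~~ hY X r0 ->
  r \in R3 P' q :|: R4 P' q -> bX X Y r -> hY X r.
Proof.
move=> qY sXY HF M1 Hs bYs hYs H0 bX0 hX0 Hr bXr.
have bYr : bY Y r by apply: bodyXY bXr.
have bY0 : bY Y r0 by apply: bodyXY bX0.
have hY0 : hY Y r0 by apply: RYl bY0 => //; rewrite inE H0.
have [P0 h0 p0 m0 n0] := R0c H0.
case nh: (hY X r) => //.
case/setUP: Hr => Hr; last first.
  have [Pr h p m n] := R4c Hr.
  have := HF _ (nr1a H0 Hr).
  by rewrite (E1a X Y h0 (Bq_id p m n)) bX0 bY0 hY0 bXr bYr (negbTE hX0) nh.
case/setUP: Hs => Hs; last first.
  have S14 : s \in R1 P' q :|: R4 P' q by rewrite inE Hs orbT.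
  have := HF _ (nr2a H0 Hr S14).
  by rewrite (E2a X Y r s h0) bX0 bY0 hY0 bXr bYr bYs (negbTE hYs) (negbTE hX0) nh.
have [h' h'H [h'Y h'Hq]] := pickH hY0.
have [D HD bD] := Dq02 r0 qY M1.
case: (eqVneq r s) => [Ers|nrs].
  subst s.
  have := HF _ (nr3a H0 Hr h'H HD).
  by rewrite (E3a X Y r h' h0 HD) bX0 bY0 hY0 bXr bYr h'Y bD (negbTE hYs) (negbTE hX0).
have := HF _ (nr7 H0 Hr Hs nrs HD h'H).
by rewrite (E7 X Y r s h' h0 HD) bX0 bY0 hY0 bXr bYr h'Y bD bYs (negbTE hYs) (negbTE hX0) nh.
Qed.

Lemma SCa1 X Y : q \notin Y -> X \subset Y -> (forall x, x \in F2 -> satr X Y x) ->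
  sat2 Y Y true true -> ~~ sat2 Y Y false true -> sat2 X Y false true || sat2 X Y true true.
Proof.
move=> qY sXY HF M1 NS.
have qX : q \notin X by apply: contra qY; apply: (subsetP sXY).
have HF0 : forall x, x \in F2 -> satr (Yb q X false) (Yb q Y false) x := HF.
have [s Hs /andP[bYs hYs]] := supp qY M1 NS.
have RX2 := R2X qY sXY HF M1 Hs bYs hYs.
case: (boolP [forall r in R0 P' q, bX X Y r ==> hY X r]) => A0.
{ apply/orP; right; apply/forall_inP => r Hr.
  case: (clsP Hr) => Hc h p m n; rewrite satr_q' // h p m n; bs.
  - by have := HF0 r (nrq Hc); rewrite satr_q' // h p m n; bs.
  - rewrite (forall_inP A0 r Hc) andbT; apply/implyP; apply: RYl => //; by rewrite inE Hc.
  - rewrite andbC; apply/andP; split; first by apply/implyP; apply: RX2.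
    by apply/implyP; apply: RYl => //; rewrite inE Hc orbT. }
apply/orP; left.
move: A0; rewrite negb_forall_in => /exists_inP[r0 H0]; rewrite negb_imply => /andP[bX0 hX0].
apply/forall_inP => r Hr.
case: (clsP Hr) => Hc h p m n; rewrite satr_q' // h p m n; bs.
- by have := HF0 r (nrq Hc); rewrite satr_q' // h p m n; bs.
- by apply/implyP; apply: RYl => //; rewrite inE Hc.
- rewrite andbC; apply/andP; split; first by apply/implyP; apply: RX2.
  by apply/implyP; apply: RYl => //; rewrite inE Hc orbT.
- apply/implyP; apply: (R34X qY sXY HF M1 Hs bYs hYs H0 bX0 hX0) => //.
  by rewrite inE Hc.
- apply/implyP; apply: (R34X qY sXY HF M1 Hs bYs hYs H0 bX0 hX0) => //.
  by rewrite inE Hc orbT.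
Qed.


Lemma hXY X Y r : X \subset Y -> hY X r -> hY Y r.
Proof. by move=> s; apply: neq0_sub; apply: setIS. Qed.

Lemma fY0 Y r : q \notin Y -> sat2 Y Y false false -> r \in R1 P' q :|: R4 P' q ->
  bY Y r -> hY Y r.
Proof.
move=> qY M; case/setUP => Hr.
  have [Pr h p m n] := R1c Hr.
  by have := forall_inP M r Pr; rewrite satr_q' // h p m n bqxYY; bs => /andP[/implyP].
have [Pr h p m n] := R4c Hr.
by have := forall_inP M r Pr; rewrite satr_q' // h p m n bqxYY; bs => /andP[/implyP].
Qed.

Lemma fX00 X Y r : q \notin Y -> X \subset Y -> sat2 X Y false false ->
  r \in R1 P' q :|: R4 P' q -> bX X Y r -> hY X r.
Proof.
move=> qY sXY M; have qX : q \notin X by apply: contra qY; apply: (subsetP sXY).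
case/setUP => Hr.
  have [Pr h p m n] := R1c Hr.
  by have := forall_inP M r Pr; rewrite satr_q' // h p m n; bs => /andP[_ /implyP].
have [Pr h p m n] := R4c Hr.
by have := forall_inP M r Pr; rewrite satr_q' // h p m n; bs => /andP[_ /implyP].
Qed.

Lemma fX01 X Y r : q \notin Y -> X \subset Y -> sat2 X Y false true ->
  (r \in R2 P' q) || (r \in R3 P' q) || (r \in R4 P' q) -> bX X Y r -> hY X r.
Proof.
move=> qY sXY M; have qX : q \notin X by apply: contra qY; apply: (subsetP sXY).
case/orP => [/orP[]|] Hr.
- have [Pr h p m n] := R2c Hr.
  by have := forall_inP M r Pr; rewrite satr_q' // h p m n; bs => /andP[_ /implyP].
- have [Pr h p m n] := R3c Hr.
  by have := forall_inP M r Pr; rewrite satr_q' // h p m n; bs => /implyP.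
- have [Pr h p m n] := R4c Hr.
  by have := forall_inP M r Pr; rewrite satr_q' // h p m n; bs => /implyP.
Qed.

Lemma fX11 X Y r : q \notin Y -> X \subset Y -> sat2 X Y true true ->
  r \in R0 P' q :|: R2 P' q -> bX X Y r -> hY X r.
Proof.
move=> qY sXY M; have qX : q \notin X by apply: contra qY; apply: (subsetP sXY).
case/setUP => Hr.
  have [Pr h p m n] := R0c Hr.
  by have := forall_inP M r Pr; rewrite satr_q' // h p m n; bs => /andP[_ /implyP].
have [Pr h p m n] := R2c Hr.
by have := forall_inP M r Pr; rewrite satr_q' // h p m n; bs => /andP[_ /implyP].
Qed.

Lemma fRq X Y (a b : bool) r : q \notin Y -> X \subset Y -> sat2 X Y a b -> r \in Rq P' q ->
  satr X Y r.
Proof.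
move=> qY sXY M Hr; have qX : q \notin X by apply: contra qY; apply: (subsetP sXY).
have [Pr h p m n] := Rqc Hr.
have := forall_inP M r Pr; rewrite satr_q' // h p m n; bs => H.
have -> : satr X Y r = satr (Yb q X false) (Yb q Y false) r by [].
by rewrite satr_q' // h p m n; bs.
Qed.

Lemma bM1 Y : q \notin Y -> (forall r, r \in Rq P' q -> satr Y Y r) ->
  (forall r, r \in R0 P' q :|: R2 P' q -> bY Y r -> hY Y r) -> sat2 Y Y true true.
Proof.
move=> qY HQ H02; apply/forall_inP => r Pr.
case: (clsP Pr) => Hc h p m n; rewrite satr_q' // h p m n bqxYY; bs.
- have := HQ r Hc.
  have -> : satr Y Y r = satr (Yb q Y false) (Yb q Y false) r by [].
  by rewrite satr_q' // h p m n bqxYY; bs.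
- have H : bY Y r ==> hY Y r by apply/implyP; apply: H02; rewrite inE Hc.
  by rewrite H.
- have H : bY Y r ==> hY Y r by apply/implyP; apply: H02; rewrite inE Hc orbT.
  by rewrite H.
Qed.

Lemma bM0 Y : q \notin Y -> (forall r, r \in Rq P' q -> satr Y Y r) ->
  (forall r, r \in R1 P' q :|: R4 P' q -> bY Y r -> hY Y r) -> sat2 Y Y false false.
Proof.
move=> qY HQ H14; apply/forall_inP => r Pr.
case: (clsP Pr) => Hc h p m n; rewrite satr_q' // h p m n bqxYY; bs.
- have := HQ r Hc.
  have -> : satr Y Y r = satr (Yb q Y false) (Yb q Y false) r by [].
  by rewrite satr_q' // h p m n bqxYY; bs.
- have H : bY Y r ==> hY Y r by apply/implyP; apply: H14; rewrite inE Hc.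
  by rewrite H.
- have H : bY Y r ==> hY Y r by apply/implyP; apply: H14; rewrite inE Hc orbT.
  by rewrite H.
Qed.

Lemma bNS Y s : q \notin Y -> s \in R3 P' q :|: R4 P' q -> bY Y s -> ~~ hY Y s ->
  ~~ sat2 Y Y false true.
Proof.
move=> qY Hs bYs hYs; apply/negP => /forall_inP M.
case/setUP: Hs => Hs.
  have [Ps h p m n] := R3c Hs.
  by have := M s Ps; rewrite satr_q' // h p m n bqxYY bYs (negbTE hYs); bs.
have [Ps h p m n] := R4c Hs.
by have := M s Ps; rewrite satr_q' // h p m n bqxYY bYs (negbTE hYs); bs.
Qed.


Lemma hY_of Z r h : h \in Hd r -> q \in Hd r = false -> h \in Z -> hY Z r.
Proof. by move=> Hh hq hZ; apply/set0Pn; exists h; rewrite in_setI (Hq_id hq) Hh hZ. Qed.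
Lemma hY_of' Z r h : h \in Hq q r -> h \in Z -> hY Z r.
Proof. by move=> Hh hZ; apply/set0Pn; exists h; rewrite in_setI Hh hZ. Qed.

Lemma coverQ Y Q r0 D : Dq q (Q :\ r0) D -> bodyY Y D -> hY Y r0 ->
  forall r, r \in Q -> bY Y r -> hY Y r.
Proof.
move=> HD bD h0 r Hr bYr; case: (eqVneq r r0) => [->//|ne].
by have := Dq_sound HD bD (r := r); rewrite in_setD1 ne Hr bYr => /(_ isT).
Qed.

Section Sound.
Variables (X Y : {set A}) (b : bool).
Hypothesis qY : q \notin Y.
Hypothesis sXY : X \subset Y.
Hypothesis Rel : sat2 Y Y b b && (b ==> ~~ sat2 Y Y false true).
Hypothesis Lst : forall b' : bool, sat2 Y Y b' b' && (b' ==> ~~ sat2 Y Y false true) ->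
  sat2 X Y false b' || (b' && sat2 X Y true true).
Hypothesis RB : sat2 X Y false b || (b && sat2 X Y true true).

Let qX : q \notin X. Proof. by apply: contra qY; apply: (subsetP sXY). Qed.

Lemma RqY r : r \in Rq P' q -> satr Y Y r.
Proof. by case/andP: Rel => M _; apply: fRq M. Qed.
Lemma RqX r : r \in Rq P' q -> satr X Y r.
Proof. by case/orP: RB => [M|/andP[_ M]]; apply: fRq M. Qed.

Lemma Xtrue : sat2 Y Y true true -> ~~ sat2 Y Y false true ->
  sat2 X Y false true || sat2 X Y true true.
Proof.
move=> M1 NS; case: b Rel RB => /andP[M N]; first by [].
by move=> _; have := @Lst true; rewrite M1 NS; apply.
Qed.

Lemma Xfalse : sat2 Y Y false false -> sat2 X Y false false.
Proof.
move=> M0; case: b Rel RB => /andP[M N] H; last by rewrite /= orbF in H.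
by have := @Lst false; rewrite M0 /= orbF; apply.
Qed.

Lemma X01_11 r0 r3 : r0 \in R0 P' q :|: R2 P' q -> (r3 \in R2 P' q) || (r3 \in R3 P' q) || (r3 \in R4 P' q) ->
  sat2 X Y false true || sat2 X Y true true -> bX X Y r0 -> bX X Y r3 -> hY X r0 || hY X r3.
Proof.
move=> H0 H3 /orP[M|M] bX0 bX3.
  by rewrite (fX01 qY sXY M H3 bX3) orbT.
by rewrite (fX11 qY sXY M H0 bX0).
Qed.

Lemma S1a r0 r4 : r0 \in R0 P' q -> r4 \in R4 P' q ->
  satr X Y (mkrule (Hd r0 :|: Hq q r4) (Bq q r0 :|: Blits r4)).
Proof.
move=> H0 H4; have [P0 h0 p0 m0 n0] := R0c H0; have [P4 h4 p4 m4 n4] := R4c H4.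
have H00 : r0 \in R0 P' q :|: R2 P' q by rewrite inE H0.
have H44 : r4 \in R1 P' q :|: R4 P' q by rewrite inE H4 orbT.
rewrite (E1a X Y h0 (Bq_id p4 m4 n4)); apply/andP; split; apply/implyP => /andP[b0 b4].
  case: b Rel => /andP[M _]; first by rewrite (RYl qY M H00 b0).
  by rewrite (fY0 qY M H44 b4) orbT.
case: b Rel RB => /andP[M N] RB'.
  have M3 : (r4 \in R2 P' q) || (r4 \in R3 P' q) || (r4 \in R4 P' q) by rewrite H4 !orbT.
  by rewrite /= in RB'; apply: X01_11 H00 M3 RB' b0 b4.
by rewrite /= orbF in RB'; rewrite (fX00 qY sXY RB' H44 b4) orbT.
Qed.

Lemma S1b r2 r4 : r2 \in R2 P' q -> r4 \in R4 P' q ->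
  satr X Y (mkrule (Hd r2) (Bq q r2 :|: notS (posS (Hq q r4)) :|: nnS (Blits r4))).
Proof.
move=> H2 H4; have [P2 h2 p2 m2 n2] := R2c H2; have [P4 h4 p4 m4 n4] := R4c H4.
have H22 : r2 \in R0 P' q :|: R2 P' q by rewrite inE H2 orbT.
have H44 : r4 \in R1 P' q :|: R4 P' q by rewrite inE H4 orbT.
rewrite (E1b X Y h2 (Bq_id p4 m4 n4)); apply/andP; split;
  apply/implyP => /andP[/andP[b2 nh4] b4].
  case: b Rel => /andP[M _]; first by rewrite (RYl qY M H22 (bodyXY (subxx _) b2)).
  by rewrite (fY0 qY M H44 b4) in nh4.
case: b Rel RB => /andP[M N] RB'; last by rewrite (fY0 qY M H44 b4) in nh4.
rewrite /= in RB'.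
have M3 : (r2 \in R2 P' q) || (r2 \in R3 P' q) || (r2 \in R4 P' q) by rewrite H2.
by have := X01_11 H22 M3 RB' b2 b2; rewrite orbb.
Qed.


Lemma M3of r : r \in R2 P' q \/ r \in R3 P' q \/ r \in R4 P' q ->
  (r \in R2 P' q) || (r \in R3 P' q) || (r \in R4 P' q).
Proof. by case=> [->|[->|->]]; rewrite ?orbT. Qed.

Lemma S2a r0 r3 r' : r0 \in R0 P' q -> r3 \in R3 P' q -> r' \in R1 P' q :|: R4 P' q ->
  satr X Y (mkrule (Hd r0 :|: Hq q r3)
       (Bq q r0 :|: Bq q r3 :|: notS (posS (Hq q r')) :|: nnS (Bq q r'))).
Proof.
move=> H0 H3 H'; have [P0 h0 p0 m0 n0] := R0c H0.
have H00 : r0 \in R0 P' q :|: R2 P' q by rewrite inE H0.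
rewrite (E2a X Y r3 r' h0); apply/andP; split;
  apply/implyP => /andP[/andP[/andP[b0 b3] nh'] b'].
  case: b Rel => /andP[M _]; first by rewrite (RYl qY M H00 b0).
  by rewrite (fY0 qY M H' b') in nh'.
case: b Rel RB => /andP[M N] RB'; last by rewrite (fY0 qY M H' b') in nh'.
rewrite /= in RB'; apply: X01_11 H00 (M3of _) RB' b0 b3; by right; left.
Qed.

Lemma S2b r2 r3 r' : r2 \in R2 P' q -> r3 \in R3 P' q -> r' \in R1 P' q :|: R4 P' q ->
  satr X Y (mkrule (Hd r2) (Bq q r2 :|: notS (posS (Hq q r3 :|: Hq q r'))
                :|: nnS (Bq q r3 :|: Bq q r'))).
Proof.
move=> H2 H3 H'; have [P2 h2 p2 m2 n2] := R2c H2.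
have H22 : r2 \in R0 P' q :|: R2 P' q by rewrite inE H2 orbT.
rewrite (E2b X Y r3 r' h2); apply/andP; split;
  apply/implyP => /andP[/andP[b2 /andP[nh3 nh']] /andP[b3 b']].
  case: b Rel => /andP[M _]; first by rewrite (RYl qY M H22 b2).
  by rewrite (fY0 qY M H' b') in nh'.
case: b Rel RB => /andP[M N] RB'; last by rewrite (fY0 qY M H' b') in nh'.
rewrite /= in RB'; have := X01_11 H22 (M3of _) RB' b2 b2; rewrite orbb; apply; by left.
Qed.

Lemma S3a r0 r3 h D : r0 \in R0 P' q -> r3 \in R3 P' q -> h \in Hd r0 ->
  Dq q ((R0 P' q :|: R2 P' q) :\ r0) D ->
  satr X Y (mkrule (Hd r0) (Bq q r0 :|: [set nn h] :|: D :|: Bq q r3 :|: notS (posS (Hq q r3)))).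
Proof.
move=> H0 H3 Hh HD; have [P0 h0 p0 m0 n0] := R0c H0.
have H00 : r0 \in R0 P' q :|: R2 P' q by rewrite inE H0.
rewrite (E3a X Y r3 h h0 HD); apply/andP; split;
  apply/implyP => /andP[/andP[/andP[/andP[b0 hY'] bD] b3] nh3].
  exact: hY_of Hh h0 hY'.
have hY0 : hY Y r0 := hY_of Hh h0 hY'.
have XT : sat2 X Y false true || sat2 X Y true true.
  apply: Xtrue.
    by apply: bM1 => //; [exact: RqY | exact: coverQ HD bD hY0].
  by apply: (bNS qY (s := r3)) => //; [rewrite inE H3 | exact: bodyXY b3].
case/orP: XT => M; last exact: fX11 qY sXY M H00 b0.
have := fX01 qY sXY M (M3of _) b3 => /(_ (or_intror (or_introl H3))) /(hXY sXY).
by rewrite (negbTE nh3).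
Qed.

Lemma S3b r2 r3 h D : r2 \in R2 P' q -> r3 \in R3 P' q -> h \in Hd r2 ->
  Dq q ((R0 P' q :|: R2 P' q) :\ r2) D ->
  satr X Y (mkrule (Hd r2)
     (Bq q r2 :|: notS (posS (Hq q r3)) :|: nnS (Bq q r3 :|: [set pos h]) :|: D)).
Proof.
move=> H2 H3 Hh HD; have [P2 h2 p2 m2 n2] := R2c H2.
have H22 : r2 \in R0 P' q :|: R2 P' q by rewrite inE H2 orbT.
rewrite (E3b X Y r3 h h2 HD); apply/andP; split;
  apply/implyP => /andP[/andP[/andP[b2 nh3] /andP[b3 hY']] bD].
  exact: hY_of Hh h2 hY'.
have hY2 : hY Y r2 := hY_of Hh h2 hY'.
have XT : sat2 X Y false true || sat2 X Y true true.
  apply: Xtrue.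
    by apply: bM1 => //; [exact: RqY | exact: coverQ HD bD hY2].
  by apply: (bNS qY (s := r3)) => //; rewrite inE H3.
case/orP: XT => M; last exact: fX11 qY sXY M H22 b2.
by apply: (fX01 qY sXY M (M3of _) b2); left.
Qed.

Lemma S4 r' D : r' \in R1 P' q :|: R4 P' q -> Dq q (R3 P' q :|: R4 P' q) D ->
  satr X Y (mkrule (Hq q r') (Bq q r' :|: D)).
Proof.
move=> H' HD; rewrite (E4 X Y r' HD).
case: b Rel RB => /andP[M N] RB'.
  rewrite /= in N; have [s Hs /andP[bYs hYs]] := supp qY M N.
  apply/andP; split; apply/implyP => /andP[_ bD];
  by have := Dq_sound HD bD Hs; rewrite bYs (negbTE hYs).
rewrite /= orbF in RB'.
apply/andP; split; apply/implyP => /andP[b' _].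
  exact: fY0 qY M H' b'.
exact: fX00 qY sXY RB' H' b'.
Qed.

Lemma S5 r' r3 r D : r' \in R1 P' q :|: R4 P' q -> r3 \in R3 P' q -> r \in R0 P' q :|: R2 P' q ->
  Dq q (R4 P' q) D ->
  satr X Y (mkrule (Hq q r') (Bq q r' :|: notS (posS (Hd r :|: Hq q r3))
                :|: nnS (Bq q r :|: Bq q r3) :|: D)).
Proof.
move=> H' H3 Hr HD.
have hr : q \in Hd r = false.
  by case/setUP: Hr => Hr; [have [_ -> _ _ _] := R0c Hr | have [_ -> _ _ _] := R2c Hr].
rewrite (E5 X Y r' r3 hr HD).
case: b Rel RB => /andP[M N] RB'.
  apply/andP; split; apply/implyP => /andP[/andP[/andP[_ /andP[nhr _]] /andP[br _]] _];
  by rewrite (RYl qY M Hr br) in nhr.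
rewrite /= orbF in RB'.
apply/andP; split; apply/implyP => /andP[/andP[/andP[b' _] _] _].
  exact: fY0 qY M H' b'.
exact: fX00 qY sXY RB' H' b'.
Qed.

Lemma S6 r' r3 h D : r' \in R1 P' q :|: R4 P' q -> r3 \in R3 P' q -> h \in Hq q r' ->
  Dq q ((R1 P' q :|: R4 P' q) :\ r') D ->
  satr X Y (mkrule (Hq q r')
       (Bq q r' :|: notS (posS (Hq q r3)) :|: nnS (Bq q r3 :|: [set pos h]) :|: D)).
Proof.
move=> H' H3 Hh HD.
rewrite (E6 X Y r' r3 h HD); apply/andP; split;
  apply/implyP => /andP[/andP[/andP[b' nh3] /andP[b3 hY']] bD].
  exact: hY_of' Hh hY'.
have M0 : sat2 Y Y false false.
  by apply: bM0 => //; [exact: RqY | exact: coverQ HD bD (hY_of' Hh hY')].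
exact: fX00 qY sXY (Xfalse M0) H' b'.
Qed.

Lemma S7 r0 r3 r3' D h : r0 \in R0 P' q -> r3 \in R3 P' q -> r3' \in R3 P' q ->
  Dq q ((R0 P' q :|: R2 P' q) :\ r0) D -> h \in Hd r0 ->
  satr X Y (mkrule (Hd r0 :|: Hq q r3)
       (Bq q r0 :|: Bq q r3 :|: notS (posS (Hq q r3'))
                :|: nnS (Bq q r3' :|: [set pos h]) :|: D)).
Proof.
move=> H0 H3 H3' HD Hh; have [P0 h0 p0 m0 n0] := R0c H0.
have H00 : r0 \in R0 P' q :|: R2 P' q by rewrite inE H0.
rewrite (E7 X Y r3 r3' h h0 HD); apply/andP; split;
  apply/implyP => /andP[/andP[/andP[/andP[b0 b3] nh3'] /andP[b3' hY']] bD].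
  by rewrite (hY_of Hh h0 hY').
have hY0 : hY Y r0 := hY_of Hh h0 hY'.
have XT : sat2 X Y false true || sat2 X Y true true.
  apply: Xtrue.
    by apply: bM1 => //; [exact: RqY | exact: coverQ HD bD hY0].
  by apply: (bNS qY (s := r3')) => //; rewrite inE H3'.
apply: X01_11 H00 (M3of _) XT b0 b3; by right; left.
Qed.

Lemma SCc x : x \in F2 -> satr X Y x.
Proof.
rewrite inE => /orP[Hx|/asboolP Hn]; first exact: RqX.
case: Hn => [[r0 [r4 [H0 H4 ->]]]|Hn]; first exact: S1a.
case: Hn => [[r0 [r3 [r' [H0 H3 H' ->]]]]|Hn]; first exact: S2a.
case: Hn => [[r0 [r3 [h [D [H0 H3 Hh HD ->]]]]]|Hn]; first exact: S3a.
case: Hn => [[r2 [r4 [H2 H4 ->]]]|Hn]; first exact: S1b.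
case: Hn => [[r2 [r3 [r' [H2 H3 H' ->]]]]|Hn]; first exact: S2b.
case: Hn => [[r2 [r3 [h [D [H2 H3 Hh HD ->]]]]]|Hn]; first exact: S3b.
case: Hn => [[r' [D [H' HD _ ->]]]|Hn]; first exact: S4.
case: Hn => [[r' [r3 [r [D [H' H3 Hr [HD _] ->]]]]]|Hn]; first exact: S5.
case: Hn => [[r' [r3 [h [D [H' H3 Hh HD ->]]]]]|Hn]; first exact: S6.
case: Hn => [r0 [r3 [r3' [D [h [H0 H3 H3' _ [HD Hh ->]]]]]]].
exact: S7.
Qed.

End Sound.


Definition qfree (L : {set lit A}) := [forall l in L, @latom A l != q].

Lemma qfreeU L1 L2 : qfree (L1 :|: L2) = qfree L1 && qfree L2.
Proof. exact: forall_inU. Qed.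
Lemma latom_notl (l : lit A) : latom (notl l) = latom l. Proof. by case: l => [[a|a]|a]. Qed.
Lemma latom_nnl (l : lit A) : latom (nnl l) = latom l. Proof. by case: l => [[a|a]|a]. Qed.
Lemma qfree_notS L : qfree (notS L) = qfree L.
Proof. by rewrite /qfree /notS forall_in_imset; apply: eq_forallb => l; rewrite latom_notl. Qed.
Lemma qfree_nnS L : qfree (nnS L) = qfree L.
Proof. by rewrite /qfree /nnS forall_in_imset; apply: eq_forallb => l; rewrite latom_nnl. Qed.
Lemma qfree_posS H : qfree (posS H) = (q \notin H).
Proof.
rewrite /qfree /posS forall_in_imset /=.
apply/forall_inP/idP => [Hf|nH a Ha]; first by apply/negP => /Hf; rewrite eqxx.
by apply: contra nH => /eqP <-.
Qed.
Lemma qfree1 (l : lit A) : qfree [set l] = (latom l != q).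
Proof. exact: forall_in1. Qed.
Lemma qfree_Bq r : qfree (Bq q r).
Proof. by apply/forall_inP => l; apply: Bq_atom. Qed.
Lemma qfree_Dq Q D : Dq q Q D -> qfree D.
Proof.
case=> Q1 [l [_ H1 H2 ->]]; rewrite qfreeU qfree_notS qfree_nnS.
apply/andP; split; rewrite /qfree forall_in_imset; apply/forall_inP => r Hr.
  exact: Bq_atom (H1 r Hr).
by have := H2 r Hr; rewrite /posS => /imsetP[a Ha ->] /=; move: Ha; rewrite /Hq in_setD1 => /andP[].
Qed.

Lemma sig_mk (h : {set A}) L : q \notin h -> qfree L -> q \notin sig_rule (mkrule h L).
Proof.
move=> qh /forall_inP HL; rewrite /sig_rule /mkrule /Hd /Bp /Bm /Bnn /= !inE (negbTE qh) /=.
apply/negP => /orP[/orP[]|] H; by have := HL _ H; rewrite eqxx.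
Qed.

Lemma qHq r : q \in Hq q r = false. Proof. by rewrite /Hq setD11. Qed.

Ltac qf := rewrite ?(qfreeU, qfree_notS, qfree_nnS, qfree_posS, qfree1, qfree_Bq, qHq, in_setU) /=.

Lemma qfree_F2 x : x \in F2 -> q \notin sig_rule x.
Proof.
rewrite inE => /orP[|/asboolP Hn]; first by rewrite inE => /andP[].
have hne : forall r h, q \in Hd r = false -> h \in Hd r -> h != q.
  by move=> r h hq Hh; apply: contraTneq Hh => ->; rewrite hq.
case: Hn => [[r0 [r4 [H0 H4 ->]]]|Hn].
  have [_ h0 _ _ _] := R0c H0; have [_ h4 p4 m4 n4] := R4c H4.
  by apply: sig_mk; rewrite -?(Bq_id p4 m4 n4); qf; rewrite ?h0.
case: Hn => [[r0 [r3 [r' [H0 H3 H' ->]]]]|Hn].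
  by have [_ h0 _ _ _] := R0c H0; apply: sig_mk; qf; rewrite ?h0.
case: Hn => [[r0 [r3 [h [D [H0 H3 Hh HD ->]]]]]|Hn].
  have [_ h0 _ _ _] := R0c H0; apply: sig_mk; qf; rewrite ?h0 ?(qfree_Dq HD) //=.
  by rewrite (hne _ _ h0 Hh).
case: Hn => [[r2 [r4 [H2 H4 ->]]]|Hn].
  have [_ h2 _ _ _] := R2c H2; have [_ h4 p4 m4 n4] := R4c H4.
  by apply: sig_mk; rewrite -?(Bq_id p4 m4 n4); qf; rewrite ?h2.
case: Hn => [[r2 [r3 [r' [H2 H3 H' ->]]]]|Hn].
  by have [_ h2 _ _ _] := R2c H2; apply: sig_mk; qf; rewrite ?h2.
case: Hn => [[r2 [r3 [h [D [H2 H3 Hh HD ->]]]]]|Hn].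
  have [_ h2 _ _ _] := R2c H2; apply: sig_mk; qf; rewrite ?h2 ?(qfree_Dq HD) //=.
  by rewrite (hne _ _ h2 Hh).
case: Hn => [[r' [D [H' HD _ ->]]]|Hn].
  by apply: sig_mk; qf; rewrite ?(qfree_Dq HD).
case: Hn => [[r' [r3 [r [D [H' H3 Hr [HD _] ->]]]]]|Hn].
  have hr : q \in Hd r = false.
    by case/setUP: Hr => Hr; [have [_ -> _ _ _] := R0c Hr | have [_ -> _ _ _] := R2c Hr].
  by apply: sig_mk; qf; rewrite ?hr ?(qfree_Dq HD).
case: Hn => [[r' [r3 [h [D [H' H3 Hh HD ->]]]]]|Hn].
  apply: sig_mk; qf; rewrite ?(qfree_Dq HD) ?andbT //.
  by move: Hh; rewrite /Hq in_setD1 => /andP[].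
case: Hn => [r0 [r3 [r3' [D [h [H0 H3 H3' _ [HD Hh ->]]]]]]].
have [_ h0 _ _ _] := R0c H0; apply: sig_mk; qf; rewrite ?h0 ?(qfree_Dq HD) //=.
by rewrite (hne _ _ h0 Hh).
Qed.

Lemma qnot_sig Q : (forall r, r \in Q -> q \notin sig_rule r) -> q \notin sig_prog Q.
Proof. by move=> H; apply/bigcupP => -[r Hr]; apply/negP; apply: H. Qed.

Lemma qfree_fSP : q \notin sig_prog (fSP P q).
Proof.
apply: qnot_sig => r Hr; have [r0 H0 s0] := sig_NF Hr.
by apply: contra (qfree_F2 H0); apply: (subsetP s0).
Qed.


Definition RelB Y (b : bool) := sat2 Y Y b b && (b ==> ~~ sat2 Y Y false true).
Definition RBf X Y (b : bool) := sat2 X Y false b || (b && sat2 X Y true true).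
Definition Ab (b : bool) : {set A} := if b then [set q] else set0.

Lemma htm_sat2 X Y (a b : bool) :
  htm P (Yb q X a) (Yb q Y b) = (Yb q X a \subset Yb q Y b) && sat2 X Y a b.
Proof. by rewrite -htm_NF. Qed.

Lemma Yb_sub X Y (a b : bool) : X \subset Y -> (a ==> b) -> Yb q X a \subset Yb q Y b.
Proof.
move=> sXY; case: a; case: b => //= _; rewrite /Yb.
- by apply: setUS.
- by apply: subset_trans sXY (subsetUr _ _).
Qed.

Local Notation S := (sig_prog P).

Lemma K1 (W Z : {set A}) : W \subset Z -> htm P W Z = htm P (W :&: S) (Z :&: S).
Proof. by move=> sWZ; rewrite (htm_restr _ _ (subxx S)) sWZ. Qed.

Lemma K3 Z (b : bool) : (b -> q \in S) -> (Yb q Z b) :&: S = (Z :&: S) :|: Ab b.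
Proof.
move=> qS; apply/setP => x; rewrite /Yb /Ab; case: b qS => qS; rewrite !inE ?orbF //.
case: eqP => [->|_] /=; last by rewrite orbF.
by rewrite (qS isT) orbT.
Qed.

Lemma K3' Z : q \notin S -> (q |: Z) :&: S = Z :&: S.
Proof.
move=> qS; apply/setP => x; rewrite !inE; case: eqP => [->|//].
by rewrite (negbTE qS) !andbF.
Qed.

Lemma K2 Y (b : bool) : q \notin Y -> RelB Y b -> b -> q \in S.
Proof.
move=> qY; case: b => // /andP[M NS] _; apply/negPn/negP => qS.
move: NS; rewrite /= => /negP; apply.
have H1 : htm P (Yb q Y true) (Yb q Y true) by rewrite htm_sat2 subxx M.
have : htm P (Yb q Y false) (Yb q Y true).
  rewrite K1 /= ?subsetUr // K3' //.
  by move: H1; rewrite K1 //= K3'.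
by rewrite htm_sat2 => /andP[].
Qed.

Lemma K4 Y (b : bool) : q \notin Y -> RelB Y b -> Ab b \in Rel P [set q] (Y :&: S).
Proof.
move=> qY R; have qS := K2 qY R; move: (R) => /andP[M NS].
have E : Y :&: S :|: Ab b = Yb q Y b :&: S by rewrite K3.
rewrite inE; apply/and3P; split.
- by case: b {R qS M NS E} => //=; rewrite sub0set.
- rewrite ht_htm E subsetIr andbT -K1 //.
  by rewrite htm_sat2 subxx.
- apply/forallP => A2; apply/implyP => pA2.
  case: b R qS M NS E pA2 => R qS M NS E pA2; last first.
    by move: pA2; rewrite /Ab properEneq subset0 => /andP[/negP].
  have -> : A2 = set0.
    move: pA2; rewrite /Ab properEneq subset1 => /andP[nA2 /orP[/eqP E2|/eqP //]].
    by rewrite E2 eqxx in nA2.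
  rewrite setU0 E ht_htm; apply/negP => /andP[H _].
  have H2 : htm P (Yb q Y false) (Yb q Y true).
    by rewrite K1; [exact: H | exact: subsetUr].
  by move: NS; rewrite /= => /negP; apply; move: H2; rewrite htm_sat2 => /andP[].
Qed.


Lemma K5 Y A0 : q \notin Y -> A0 \in Rel P [set q] (Y :&: S) ->
  RelB Y (q \in A0) /\ A0 = Ab (q \in A0).
Proof.
move=> qY; rewrite inE => /and3P[sA htA /forallP mA].
move: sA htA mA; rewrite subset1 => /orP[/eqP->|/eqP->] htA mA; last first.
  rewrite inE /Ab; split => //; rewrite /RelB andbT.
  move: htA; rewrite setU0 ht_htm => /andP[h _].
  have : htm P (Yb q Y false) (Yb q Y false) by rewrite K1 //.
  by rewrite htm_sat2 => /andP[].
rewrite set11 /Ab; split => //.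
move: htA; rewrite ht_htm => /andP[h sS].
have qS : q \in S by apply: (subsetP sS); rewrite !inE eqxx orbT.
have E : Y :&: S :|: [set q] = Yb q Y true :&: S by rewrite K3.
rewrite /RelB /=; apply/andP; split.
  have : htm P (Yb q Y true) (Yb q Y true) by rewrite K1 // -E.
  by rewrite htm_sat2 => /andP[].
apply/negP => H.
have := mA set0; rewrite proper0 (_ : [set q] != set0) /=; last first.
  by apply/set0Pn; exists q; rewrite set11.
rewrite setU0 ht_htm sS andbT E => /negP; apply.
have : htm P (Yb q Y false) (Yb q Y true) by rewrite htm_sat2 H /= subsetUr.
by rewrite K1 //= subsetUr.
Qed.

Lemma K6 X Y (b : bool) : q \notin Y -> RelB Y b -> X \subset Y -> RBf X Y b ->
  X :&: S \in RYA P [set q] (Y :&: S) (Ab b).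
Proof.
move=> qY R sXY RB; have qS := K2 qY R.
have qX : q \notin X by apply: contra qY; apply: (subsetP sXY).
have [a ab H] : exists2 a : bool, a ==> b & sat2 X Y a b.
  case/orP: RB => [H|/andP[Hb H]]; first by exists false.
  by move: Hb H; case: (b) => // _ H; exists true.
apply/imsetP; exists (Yb q X a :&: S).
  rewrite inE ht_htm -K3 // subsetIr andbT -K1 ?Yb_sub //.
  by rewrite htm_sat2 H Yb_sub.
apply/setP => x; rewrite /Yb; case: a {ab H}; rewrite !inE //.
all: by case: eqP => [->|]; rewrite ?(negbTE qX) ?andbF.
Qed.

Lemma K7 X Y (b : bool) : q \notin Y -> RelB Y b -> X \subset Y ->
  X :&: S \in RYA P [set q] (Y :&: S) (Ab b) -> RBf X Y b.
Proof.
move=> qY R sXY; have qS := K2 qY R.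
have qX : q \notin X by apply: contra qY; apply: (subsetP sXY).
case/imsetP => X1; rewrite inE ht_htm => /andP[hX1 sS] EX.
move: (hX1) => /andP[sX1 _].
have ab : (q \in X1) ==> b.
  apply/implyP => qX1; have := subsetP sX1 q qX1; rewrite !inE (negbTE qY) /= /Ab.
  by case: b {R qS EX sS hX1 sX1}; rewrite ?inE.
have X1S : X1 \subset S := subset_trans sX1 sS.
have EX1 : X1 = Yb q X (q \in X1) :&: S.
  apply/setP => x; case: (eqVneq x q) => [->|nx].
    rewrite /Yb; case qX1: (q \in X1); rewrite !inE ?eqxx ?(negbTE qX) //=.
    by rewrite (subsetP X1S q qX1).
  rewrite inE mem_Yb //.
  have : x \in X :&: S = (x \in X1 :\: [set q]) by rewrite EX.
  by rewrite !inE nx /= => ->.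
have : htm P (Yb q X (q \in X1)) (Yb q Y b).
  rewrite K1; last exact: Yb_sub.
  by rewrite -EX1 K3 //.
rewrite htm_sat2 => /andP[_ H].
case: (q \in X1) ab H => /= [Hb H|_ H]; rewrite /RBf.
  by rewrite Hb in H *; rewrite H orbT.
by rewrite H.
Qed.

Lemma bridge Y : ~ Omega P [set q] -> q \notin Y -> (exists b, RelB Y b) ->
  exists b, RelB Y b /\
    (forall b', RelB Y b' -> forall X, X \subset Y -> RBf X Y b -> RBf X Y b').
Proof.
move=> nO qY [b Rb].
have Y0q : Y :&: S \subset ~: [set q].
  apply/subsetP => x; rewrite !inE => /andP[xY _]; apply/negP => /eqP Ex.
  by rewrite -Ex xY in qY.
have nE : calR P [set q] (Y :&: S) != set0.
  by apply/set0Pn; exists (RYA P [set q] (Y :&: S) (Ab b)); apply: imset_f; apply: K4.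
have [Lm [HL Lmin]] : exists Lm, Lm \in calR P [set q] (Y :&: S) /\
    forall R', R' \in calR P [set q] (Y :&: S) -> Lm \subset R'.
  by apply: Classical_Prop.NNPP => H; apply: nO; exists (Y :&: S).
case/imsetP: HL => A0 HA0 EL.
have [RA0 EA0] := K5 qY HA0.
exists (q \in A0); split => // b' Rb' X sXY RBX.
have := K6 qY RA0 sXY RBX; rewrite -EA0 -EL => XL.
apply: (K7 qY Rb' sXY); apply: (subsetP (Lmin _ _)) XL.
by apply: imset_f; apply: K4.
Qed.


Lemma Yb_D1 Z (b : bool) : q \notin Z -> (Yb q Z b) :\ q = Z.
Proof.
move=> qZ; case: b; rewrite /Yb; first by rewrite setU1K.
by apply/setP => x; rewrite in_setD1; case: eqP => [->|] //=; rewrite (negbTE qZ).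
Qed.

Lemma Yb_decomp Z : Z = Yb q (Z :\ q) (q \in Z).
Proof.
apply/setP => x; rewrite /Yb; case qZ: (q \in Z); rewrite !inE;
  by case: eqP => [->|] //=; rewrite qZ.
Qed.

Lemma htm_qinv (R : program A) X Y : q \notin sig_prog R ->
  htm R X Y = (X \subset Y) && htm R (X :\ q) (Y :\ q).
Proof.
move=> qR; have sR : sig_prog R \subset ~: [set q].
  by apply/subsetP => x xR; rewrite !inE; apply: contraNneq qR => <-.
by rewrite (htm_restr _ _ sR) -!setDE.
Qed.

Lemma qnot_sigU (R1 R2 : program A) : q \notin sig_prog R1 -> q \notin sig_prog R2 ->
  q \notin sig_prog (R1 :|: R2).
Proof.
move=> q1 q2; apply: qnot_sig => r; case/setUP => Hr; apply/negP => qr.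
  by move/negP: q1; apply; apply/bigcupP; exists r.
by move/negP: q2; apply; apply/bigcupP; exists r.
Qed.


Lemma main_thm : ~ Omega P [set q] -> forall R : program A, q \notin sig_prog R ->
  AS (fSP P q :|: R) = [set Y :\ q | Y in AS (P :|: R)].
Proof.
move=> nO R qR.
have qFR : q \notin sig_prog (fSP P q :|: R) := qnot_sigU qfree_fSP qR.
have hF : forall X Y, htm (fSP P q) X Y = (X \subset Y) && [forall x in F2, satr X Y x].
  by move=> X Y; rewrite fSP_F2 htm_NF.
apply/setP => Y'; apply/idP/imsetP.
- rewrite AS_htm => /andP[hYY mnb].
  have qY' : q \notin Y'.
    by apply: contra qFR; apply: (subsetP (minimal_sig hYY mnb)).
  move: (hYY); rewrite htmU => /andP[hFY hRY].
  have HF : forall x, x \in F2 -> satr Y' Y' x.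
    by move: hFY; rewrite hF => /andP[_ /forall_inP].
  have [b Rb] := SCb qY' HF.
  have [b0 [Rb0 Lst]] := bridge nO qY' (ex_intro _ b Rb).
  exists (Yb q Y' b0); last by rewrite Yb_D1.
  rewrite AS_htm htmU; apply/andP; split.
    apply/andP; split; first by rewrite htm_sat2 subxx; case/andP: Rb0.
    by rewrite (htm_qinv _ _ qR) subxx Yb_D1.
  apply/forallP => X; apply/implyP => pX; apply/negP; rewrite htmU => /andP[hPX hRX].
  have sXY := proper_sub pX.
  set X' := X :\ q.
  have EX : X = Yb q X' (q \in X) := Yb_decomp X.
  have ab : (q \in X) ==> b0.
    by apply/implyP => qX; have := subsetP sXY q qX; rewrite q_Yb.
  have sX'Y' : X' \subset Y'.
    by rewrite -(Yb_D1 b0 qY'); apply: setSD.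
  have sat : sat2 X' Y' (q \in X) b0.
    by move: hPX; rewrite {1}EX htm_sat2 => /andP[].
  have RBX : RBf X' Y' b0.
    move: ab sat; rewrite /RBf; case: (q \in X) => /= [Hb H|_ ->//].
    by rewrite Hb in H *; rewrite H orbT.
  case: (eqVneq X' Y') => [EXY|nXY].
  { have nab : (q \in X) != b0.
      apply: contraTneq pX => Eb; rewrite EX EXY Eb.
      by rewrite properEneq eqxx.
    destruct b0.
    + case/andP: Rb0 => _ /= /negP; apply.
      by move: ab nab sat; case: (q \in X) => //= _ _; rewrite EXY.
    + by move: ab nab; case: (q \in X). }
  have Lst' : forall b', RelB Y' b' -> RBf X' Y' b'.
    by move=> b' Rb'; apply: Lst Rb' X' sX'Y' RBX.
  have HFX : forall x, x \in F2 -> satr X' Y' x := SCc qY' sX'Y' Rb0 Lst' RBX.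
  have pX' : X' \proper Y' by rewrite properEneq nXY sX'Y'.
  move: (forallP mnb X'); rewrite pX' /= htmU hF sX'Y' /=.
  move: hRX; rewrite (htm_qinv _ _ qR) Yb_D1 // => /andP[_ ->].
  by rewrite andbT; move/negP; apply; apply/forall_inP.
- case=> Y HY ->.
  set W := Y :\ q; set b := q \in Y.
  have qW : q \notin W by rewrite /W setD11.
  have EY : Y = Yb q W b := Yb_decomp Y.
  move: (HY); rewrite AS_htm htmU => /andP[/andP[hPY hRY] mnb].
  have hRW : htm R W W.
    by move: hRY; rewrite (htm_qinv _ _ qR) => /andP[].
  have Rb : RelB W b.
    have hPY' : htm P (Yb q W b) (Yb q W b) by rewrite -EY.
    apply/andP; split; first by move: hPY'; rewrite htm_sat2 => /andP[].
    apply/implyP => Hb; apply/negP => H.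
    have pY : W \proper Y.
      rewrite properEneq subD1set andbT; apply/negP => /eqP E.
      by move: Hb; rewrite /b -E /W setD11.
    move: (forallP mnb W); rewrite pY /= htmU => /negP; apply.
    apply/andP; split.
      have -> : W = Yb q W false by [].
      by rewrite EY Hb htm_sat2 H andbT; apply: Yb_sub.
    have WW : W :\ q = W by rewrite /W; apply/setP => x; rewrite !inE; case: eqP.
    by rewrite (htm_qinv _ _ qR) subD1set /= WW hRW.
  have [b0 [Rb0 Lst]] := bridge nO qW (ex_intro _ b Rb).
  rewrite AS_htm htmU; apply/andP; split.
    apply/andP; split; last exact: hRW.
    have RBW : RBf W W b0.
      case/andP: Rb0 => M _; move: M; rewrite /RBf; case: (b0) => M; rewrite M ?orbT //.
    rewrite hF subxx /=; apply/forall_inP.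
    have Lst' : forall b', RelB W b' -> RBf W W b' by move=> b' Rb'; apply: Lst Rb' W (subxx W) RBW.
    exact: SCc qW (subxx W) Rb0 Lst' RBW.
  apply/forallP => X; apply/implyP => pX; apply/negP; rewrite htmU => /andP[hFX hRX].
  have sXW := proper_sub pX.
  have qX : q \notin X by apply: contra qW; apply: (subsetP sXW).
  have HF : forall x, x \in F2 -> satr X W x by move: hFX; rewrite hF => /andP[_ /forall_inP].
  have RBX : RBf X W b.
    case/andP: Rb => M NS; case: (boolP b) => Hb.
      rewrite Hb in M NS; rewrite /RBf /=.
      exact: SCa1 qW sXW HF M NS.
    rewrite (negbTE Hb) in M; rewrite /RBf orbF.
    exact: SCa0 qW sXW HF M.
  have [a ab sa] : exists2 a : bool, a ==> b & sat2 X W a b.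
    move: RBX; rewrite /RBf => /orP[H|/andP[Hb H]]; first by exists false.
    by exists true; rewrite Hb.
  have sX2 : Yb q X a \subset Y by rewrite EY; apply: Yb_sub.
  have hPX2 : htm P (Yb q X a) Y by rewrite EY htm_sat2 sa andbT; apply: Yb_sub.
  have hRX2 : htm R (Yb q X a) Y by rewrite (htm_qinv _ _ qR) sX2 /= Yb_D1.
  have pX2 : Yb q X a \proper Y.
    rewrite properEneq sX2 andbT; apply/negP => /eqP E2.
    have : (Yb q X a) :\ q = Y :\ q by rewrite E2.
    rewrite Yb_D1 // => EXW.
    by move: pX; rewrite properEneq EXW eqxx.
  by move: (forallP mnb (Yb q X a)); rewrite pX2 /= htmU hPX2 hRX2.
Qed.

End Main.

Unset Implicit Arguments.

Theorem theorem2 (A : finType) (P : {set rule A}) (q : A) :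
  ~ Omega P [set q] ->
  forall R : {set rule A}, q \notin sig_prog R ->
    AS (fSP P q :|: R) = [set Y :\ q | Y in AS (P :|: R)].
Proof. exact: main_thm. Qed.
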